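(* Let $0<s<1/2$ and $\beta:=2s-\tfrac32$. There is $C=C(s)$ such that for every $T>0$, every $\omega\in C([0,T];\ell^2_s(\mathbb Z))$ and every $t\in[0,T]$, $$\|\mathcal N[\omega](t)\|_{\ell^2_\beta}\le C\|\omega(t)\|_{\ell^2_s}^3 .$$
   Context: $\langle n\rangle=(1+n^2)^{1/2}$; $\ell^2_s(\mathbb Z)$ is the space of $\omega:\mathbb Z\to\mathbb C$ with $\|\omega\|_{\ell^2_s}:=\|\langle\cdot\rangle^s\omega\|_{\ell^2}<\infty$. For $\omega$ set $\omega^*(n):=\overline{\omega(-n)}$. Write $n_{ij\ldots}=n_i+n_j+\cdots$, $\hat n:=n-i\mathbf 1_{\{n=0\}}$. For integers with $n=n_{123}$ define $m_1:=2i\frac{n n_{23}}{\hat n_1\hat n_2}\mathbf 1_{\{n>0\}}\mathbf 1_{\{n_{23}<0\}}\mathbf 1_{\{n_3\neq0\}}$, $m_2:=2i\frac{n n_{23}}{\hat n_1\hat n_2}\mathbf 1_{\{n<0\}}\mathbf 1_{\{n_{23}>0\}}\mathbf 1_{\{n_3\neq0\}}$, $m_3:=2i\frac{n}{\hat n_1}\mathbf 1_{\{n<0\}}\mathbf 1_{\{n_2n_3\neq0\}}$ (all functions of $(n,n_1,n_2,n_3)$), $\tilde m_1:=m_1\mathbf 1_{\{n_{12}n_{13}\neq0\}}$, and $\Phi:=n|n|-n_1|n_1|-n_2|n_2|-n_3|n_3|$. For $\omega:[0,T]\to\ell^2_s$ and $t\in[0,T]$, $n\in\mathbb Z$, $$\mathcal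 N[\omega](t,n):=\sum_{n=n_{123}}e^{it\Phi}\big[\tilde m_1\,\omega(t,n_1)\omega(t,n_2)\omega^*(t,n_3)+m_2\,\omega(t,n_1)\omega^*(t,n_2)\omega(t,n_3)+m_3\,\omega^*(t,n_1)\omega(t,n_2)\omega(t,n_3)\big],$$ the sum being over $(n_1,n_2,n_3)\in\mathbb Z^3$ with $n_1+n_2+n_3=n$. *)

(* Defs.v *)
From Stdlib Require Import Reals ZArith Lra.
Open Scope R_scope.

Definition Cplx := (R * R)%type.
Definition Cre (z : Cplx) : R := fst z.
Definition Cim (z : Cplx) : R := snd z.
Definition C0 : Cplx := (0, 0).
Definition CofR (x : R) : Cplx := (x, 0).
Definition Ci : Cplx := (0, 1).
Definition Cadd (z w : Cplx) : Cplx := (Cre z + Cre w, Cim z + Cim w).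
Definition Copp (z : Cplx) : Cplx := (- Cre z, - Cim z).
Definition Csub (z w : Cplx) : Cplx := Cadd z (Copp w).
Definition Cmul (z w : Cplx) : Cplx :=
  (Cre z * Cre w - Cim z * Cim w, Cre z * Cim w + Cim z * Cre w).
Definition Cnorm2 (z : Cplx) : R := Cre z ^ 2 + Cim z ^ 2.
Definition Cconj (z : Cplx) : Cplx := (Cre z, - Cim z).
Definition Cinv (z : Cplx) : Cplx := (Cre z / Cnorm2 z, - Cim z / Cnorm2 z).
Definition Cdiv (z w : Cplx) : Cplx := Cmul z (Cinv w).
Definition Cexpi (x : R) : Cplx := (cos x, sin x).

(** Convergence of a complex sequence (componentwise = in modulus). *)
Definition Ccv (u : nat -> Cplx) (v : Cplx) : Prop :=
  Un_cv (fun k => Cre (u k)) (Cre v) /\ Un_cv (fun k => Cim (u k)) (Cim v).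

Fixpoint sum_nat_R (m : nat) (f : nat -> R) : R :=
  match m with O => 0 | S m' => sum_nat_R m' f + f m' end.
Fixpoint sum_nat_C (m : nat) (f : nat -> Cplx) : Cplx :=
  match m with O => C0 | S m' => Cadd (sum_nat_C m' f) (f m') end.

Definition sumZ_R (K : nat) (f : Z -> R) : R :=
  sum_nat_R (2 * K + 1) (fun j => f (Z.of_nat j - Z.of_nat K)%Z).
Definition sumZ_C (K : nat) (f : Z -> Cplx) : Cplx :=
  sum_nat_C (2 * K + 1) (fun j => f (Z.of_nat j - Z.of_nat K)%Z).

Definition jbr (n : Z) : R := sqrt (1 + IZR n ^ 2).

Definition l2sq_partial (s : R) (w : Z -> Cplx) (K : nat) : R :=
  sumZ_R K (fun n => Rpower (jbr n) (2 * s) * Cnorm2 (w n)).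

(** w in l^2_s, with  ||w||_{l^2_s}^2 = L *)
Definition l2sq_is (s : R) (w : Z -> Cplx) (L : R) : Prop :=
  Un_cv (l2sq_partial s w) L.
Definition in_l2 (s : R) (w : Z -> Cplx) : Prop := exists L, l2sq_is s w L.

Definition star (w : Z -> Cplx) (n : Z) : Cplx := Cconj (w (- n)%Z).

Definition ind (b : bool) : R := if b then 1 else 0.
Definition hatZ (n : Z) : Cplx := (IZR n, - ind (Z.eqb n 0)).

Definition m1 (n n1 n2 n3 : Z) : Cplx :=
  Cmul (CofR (ind (Z.ltb 0 n) * ind (Z.ltb (n2 + n3) 0) * ind (negb (Z.eqb n3 0))))
    (Cdiv (Cmul (CofR 2) (Cmul Ci (CofR (IZR n * IZR (n2 + n3)))))
          (Cmul (hatZ n1) (hatZ n2))).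
Definition m2 (n n1 n2 n3 : Z) : Cplx :=
  Cmul (CofR (ind (Z.ltb n 0) * ind (Z.ltb 0 (n2 + n3)) * ind (negb (Z.eqb n3 0))))
    (Cdiv (Cmul (CofR 2) (Cmul Ci (CofR (IZR n * IZR (n2 + n3)))))
          (Cmul (hatZ n1) (hatZ n2))).
Definition m3 (n n1 n2 n3 : Z) : Cplx :=
  Cmul (CofR (ind (Z.ltb n 0) * ind (negb (Z.eqb (n2 * n3) 0))))
    (Cdiv (Cmul (CofR 2) (Cmul Ci (CofR (IZR n)))) (hatZ n1)).
Definition m1t (n n1 n2 n3 : Z) : Cplx :=
  Cmul (CofR (ind (negb (Z.eqb ((n1 + n2) * (n1 + n3)) 0)))) (m1 n n1 n2 n3).

Definition Phi (n n1 n2 n3 : Z) : Z :=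
  (n * Z.abs n - n1 * Z.abs n1 - n2 * Z.abs n2 - n3 * Z.abs n3)%Z.

Definition Nterm (w : Z -> Cplx) (t : R) (n n1 n2 : Z) : Cplx :=
  let n3 := (n - n1 - n2)%Z in
  Cmul (Cexpi (t * IZR (Phi n n1 n2 n3)))
    (Cadd (Cmul (m1t n n1 n2 n3) (Cmul (w n1) (Cmul (w n2) (star w n3))))
    (Cadd (Cmul (m2 n n1 n2 n3) (Cmul (w n1) (Cmul (star w n2) (w n3))))
          (Cmul (m3 n n1 n2 n3) (Cmul (star w n1) (Cmul (w n2) (w n3)))))).

(** Square partial sums of the series over {n1+n2+n3 = n}, i.e. over
    (n1,n2) in [-K,K]^2. *)
Definition Npartial (w : Z -> Cplx) (t : R) (n : Z) (K : nat) : Cplx :=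
  sumZ_C K (fun n1 => sumZ_C K (fun n2 => Nterm w t n n1 n2)).

Definition Nval (w : Z -> Cplx) (t : R) (n : Z) (v : Cplx) : Prop :=
  Ccv (Npartial w t n) v.

(* Main.v *)
Require Import Defs.
From Stdlib Require Import Reals ZArith Lra Lia Psatz.
Open Scope R_scope.


Lemma snR_S m f : sum_nat_R (S m) f = sum_nat_R m f + f m.
Proof. reflexivity. Qed.

Lemma snR_ext m f g : (forall j, (j < m)%nat -> f j = g j) -> sum_nat_R m f = sum_nat_R m g.
Proof. induction m; intros H; simpl; auto. rewrite IHm, H; auto; intros; apply H; lia. Qed.

Lemma snR_le m f g : (forall j, (j < m)%nat -> f j <= g j) -> sum_nat_R m f <= sum_nat_R m g.
Proof. induction m; intros H; simpl; [lra|]. assert (f m <= g m) by (apply H; lia).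
  assert (sum_nat_R m f <= sum_nat_R m g) by (apply IHm; intros; apply H; lia). lra. Qed.

Lemma snR_0 m : sum_nat_R m (fun _ => 0) = 0.
Proof. induction m; simpl; lra. Qed.

Lemma snR_nonneg m f : (forall j, (j < m)%nat -> 0 <= f j) -> 0 <= sum_nat_R m f.
Proof. intros H. rewrite <- (snR_0 m). apply snR_le. auto. Qed.

Lemma snR_plus m f g : sum_nat_R m (fun j => f j + g j) = sum_nat_R m f + sum_nat_R m g.
Proof. induction m; simpl; lra. Qed.

Lemma snR_scal m c f : sum_nat_R m (fun j => c * f j) = c * sum_nat_R m f.
Proof. induction m; simpl; [lra|]. rewrite IHm; ring. Qed.

Lemma snR_shift0 m f : sum_nat_R (S m) f = f 0%nat + sum_nat_R m (fun j => f (S j)).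
Proof. induction m; simpl; [lra|]. simpl in IHm. rewrite IHm. ring. Qed.

Lemma snR_mono m M f : (forall j, 0 <= f j) -> (m <= M)%nat -> sum_nat_R m f <= sum_nat_R M f.
Proof. intros Hf H. induction H; [lra|]. simpl. specialize (Hf m0). lra. Qed.

Lemma snR_shift_le m d g : (forall j, 0 <= g j) ->
  sum_nat_R m (fun j => g (j + d)%nat) <= sum_nat_R (m + d) g.
Proof. intros Hg. induction m; simpl.
  - apply snR_nonneg; auto.
  - lra.
Qed.

Lemma snR_swap m k F : sum_nat_R m (fun a => sum_nat_R k (F a)) =
  sum_nat_R k (fun b => sum_nat_R m (fun a => F a b)).
Proof. induction m; simpl.
  - rewrite snR_0; auto.
  - rewrite IHm. rewrite <- snR_plus. apply snR_ext. intros; simpl; auto.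
Qed.

Lemma snR_CS m t A B : (forall j, 0 <= A j) -> (forall j, 0 <= B j) ->
  (forall j, t j ^ 2 <= A j * B j) ->
  (sum_nat_R m t) ^ 2 <= sum_nat_R m A * sum_nat_R m B.
Proof. intros HA HB Ht. induction m; [simpl; lra|]. rewrite !snR_S.
  set (S0 := sum_nat_R m t) in *. set (P := sum_nat_R m A) in *. set (Q := sum_nat_R m B) in *.
  assert (HP : 0 <= P) by (apply snR_nonneg; auto).
  assert (HQ : 0 <= Q) by (apply snR_nonneg; auto).
  specialize (HA m); specialize (HB m); specialize (Ht m).
  assert (H2 : 2 * S0 * t m <= P * B m + A m * Q).
  { assert (Hsq : (2 * S0 * t m) ^ 2 <= (P * B m + A m * Q) ^ 2).
    { assert (4 * (S0^2) * (t m ^ 2) <= 4 * (P * Q) * (A m * B m)).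
      { apply Rmult_le_compat; nra. }
      assert (0 <= (P*B m - A m*Q)^2) by apply pow2_ge_0. 
      replace ((2 * S0 * t m) ^ 2) with (4 * (S0^2) * (t m ^ 2)) by ring. nra. }
    assert (0 <= P * B m + A m * Q) by nra.
    destruct (Rle_or_lt (2 * S0 * t m) (P * B m + A m * Q)) as [|Hc]; [lra|].
    exfalso. nra. }
  nra.
Qed.

Definition inW (K : nat) (n : Z) : Prop := (- Z.of_nat K <= n <= Z.of_nat K)%Z.

Lemma sZ_ext K f g : (forall n, inW K n -> f n = g n) -> sumZ_R K f = sumZ_R K g.
Proof. intros H. unfold sumZ_R. apply snR_ext. intros j Hj. apply H. unfold inW. lia. Qed.

Lemma sZ_le K f g : (forall n, inW K n -> f n <= g n) -> sumZ_R K f <= sumZ_R K g.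
Proof. intros H. unfold sumZ_R. apply snR_le. intros j Hj. apply H. unfold inW. lia. Qed.

Lemma sZ_nonneg K f : (forall n, inW K n -> 0 <= f n) -> 0 <= sumZ_R K f.
Proof. intros H. unfold sumZ_R. apply snR_nonneg. intros j Hj. apply H. unfold inW. lia. Qed.

Lemma sZ_plus K f g : sumZ_R K (fun n => f n + g n) = sumZ_R K f + sumZ_R K g.
Proof. unfold sumZ_R. apply snR_plus. Qed.

Lemma sZ_scal K c f : sumZ_R K (fun n => c * f n) = c * sumZ_R K f.
Proof. unfold sumZ_R. apply snR_scal. Qed.

Lemma sZ_swap K1 K2 F : sumZ_R K1 (fun a => sumZ_R K2 (F a)) =
  sumZ_R K2 (fun b => sumZ_R K1 (fun a => F a b)).
Proof. unfold sumZ_R. apply snR_swap. Qed.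

Lemma sZ_CS K t A B : (forall j, 0 <= A j) -> (forall j, 0 <= B j) ->
  (forall j, t j ^ 2 <= A j * B j) -> (sumZ_R K t) ^ 2 <= sumZ_R K A * sumZ_R K B.
Proof. intros. unfold sumZ_R. apply snR_CS; auto. Qed.

Lemma sZ_step K f : sumZ_R (S K) f =
  sumZ_R K f + f (- Z.of_nat (S K))%Z + f (Z.of_nat (S K)).
Proof. unfold sumZ_R.
  replace (2 * S K + 1)%nat with (S (S (2 * K + 1))) by lia.
  rewrite snR_shift0, snR_S.
  rewrite (snR_ext _ (fun j => f (Z.of_nat (S j) - Z.of_nat (S K))%Z)
     (fun j => f (Z.of_nat j - Z.of_nat K)%Z)).
  2:{ intros; f_equal; lia. }
  replace (Z.of_nat 0 - Z.of_nat (S K))%Z with (- Z.of_nat (S K))%Z by lia.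
  replace (Z.of_nat (S (2 * K + 1)) - Z.of_nat (S K))%Z with (Z.of_nat (S K)) by lia.
  ring.
Qed.

Lemma sZ_reflect K f : sumZ_R K (fun n => f (- n)%Z) = sumZ_R K f.
Proof. induction K.
  - unfold sumZ_R; simpl. replace (- (0 - 0))%Z with 0%Z by lia. auto.
  - rewrite !sZ_step, IHK. rewrite Z.opp_involutive. ring.
Qed.

Lemma sZ_mono_win K1 K2 f : (forall n, 0 <= f n) -> (K1 <= K2)%nat ->
  sumZ_R K1 f <= sumZ_R K2 f.
Proof. intros Hf H. induction H; [lra|]. rewrite sZ_step.
  pose proof (Hf (- Z.of_nat (S m))%Z). pose proof (Hf (Z.of_nat (S m))). lra. Qed.

Lemma sZ_support K1 K2 f : (forall n, (Z.of_nat K1 < Z.abs n)%Z -> f n = 0) ->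
  (K1 <= K2)%nat -> sumZ_R K2 f = sumZ_R K1 f.
Proof. intros Hf H. induction H; [auto|]. rewrite sZ_step, IHle.
  rewrite !Hf by lia. ring. Qed.

Lemma sZ_shift_le K K2 c f : (forall n, 0 <= f n) ->
  (Z.of_nat K + Z.abs c <= Z.of_nat K2)%Z ->
  sumZ_R K (fun n => f (n + c)%Z) <= sumZ_R K2 f.
Proof. intros Hf H. unfold sumZ_R.
  set (d := Z.to_nat (Z.of_nat K2 - Z.of_nat K + c)).
  rewrite (snR_ext _ _ (fun j => (fun j => f (Z.of_nat j - Z.of_nat K2)%Z) (j + d)%nat)).
  2:{ intros j Hj. f_equal. unfold d. lia. }
  eapply Rle_trans. apply (snR_shift_le _ _ (fun j => f (Z.of_nat j - Z.of_nat K2)%Z)). intros; auto.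
  apply snR_mono; auto. unfold d. lia.
Qed.

Lemma sZ_single K n0 f : (forall n, 0 <= f n) -> inW K n0 -> f n0 <= sumZ_R K f.
Proof. intros Hf H. eapply Rle_trans. 2: apply (sZ_shift_le 0 K n0); auto.
  unfold sumZ_R; simpl. replace (0 - 0 + n0)%Z with n0 by lia. lra. unfold inW in H. lia. Qed.

Lemma snR_const_le m f c : (forall j, (j < m)%nat -> f j <= c) -> sum_nat_R m f <= INR m * c.
Proof. induction m; intros H; [simpl; lra|]. rewrite snR_S, S_INR.
  assert (f m <= c) by (apply H; lia). assert (sum_nat_R m f <= INR m * c) by (apply IHm; intros; apply H; lia).
  lra. Qed.

Lemma sZ_const_le K f c : (forall n, inW K n -> f n <= c) -> sumZ_R K f <= INR (2 * K + 1) * c.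
Proof. intros H. unfold sumZ_R. apply snR_const_le. intros j Hj. apply H. unfold inW; lia. Qed.

Lemma sZ_half K f : (forall n, f (- n)%Z = f n) ->
  sumZ_R K f = f 0%Z + 2 * sum_nat_R K (fun j => f (Z.of_nat (S j))).
Proof. intros Hf. induction K.
  - unfold sumZ_R; simpl. ring.
  - rewrite sZ_step, IHK, snR_S, Hf. ring.
Qed.

Definition ind_le (a b : Z) : R := Defs.ind (Z.leb a b).

Lemma ind_le_range a b : 0 <= ind_le a b <= 1.
Proof. unfold ind_le, Defs.ind. destruct (Z.leb a b); lra. Qed.

Lemma sZ_restrict K2 N f : (forall n, 0 <= f n) ->
  sumZ_R K2 (fun n => f n * ind_le (Z.abs n) (Z.of_nat N)) <= sumZ_R N f.
Proof. intros Hf. destruct (le_lt_dec K2 N).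
  - eapply Rle_trans. apply sZ_le with (g := f). intros n _.
    pose proof (ind_le_range (Z.abs n) (Z.of_nat N)). pose proof (Hf n). nra.
    apply sZ_mono_win; auto.
  - rewrite (sZ_support N K2). 2:{ intros n Hn. unfold ind_le, Defs.ind.
      destruct (Z.leb_spec (Z.abs n) (Z.of_nat N)); [lia| ring]. } 2: lia.
    apply sZ_le. intros n Hn. unfold ind_le, Defs.ind.
    destruct (Z.leb_spec (Z.abs n) (Z.of_nat N)); [lra| unfold inW in Hn; lia].
Qed.


Lemma Rpower_pos x y : 0 < Rpower x y.
Proof. unfold Rpower. apply exp_pos. Qed.

Lemma jbr_pos k : 0 < jbr k.
Proof. unfold jbr. apply sqrt_lt_R0. pose proof (pow2_ge_0 (IZR k)). lra. Qed.

Lemma jbr_ge1 k : 1 <= jbr k.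
Proof. unfold jbr. rewrite <- sqrt_1 at 1. apply sqrt_le_1_alt. pose proof (pow2_ge_0 (IZR k)). lra. Qed.

Lemma jbr_sq k : jbr k ^ 2 = 1 + IZR k ^ 2.
Proof. unfold jbr. rewrite pow2_sqrt; auto. pose proof (pow2_ge_0 (IZR k)). lra. Qed.

Lemma jbr_opp k : jbr (- k) = jbr k.
Proof. unfold jbr. rewrite opp_IZR. f_equal. ring. Qed.

Lemma jbr_abs k : jbr (Z.abs k) = jbr k.
Proof. destruct (Z.abs_spec k) as [[_ ->]|[_ ->]]; auto. apply jbr_opp. Qed.

Lemma jbr_ge_abs k : Rabs (IZR k) <= jbr k.
Proof. rewrite <- sqrt_Rsqr_abs. unfold jbr. apply sqrt_le_1_alt. unfold Rsqr. simpl. nra. Qed.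

Lemma jbr_le_of_sq a b c : 0 <= c -> 1 + IZR a ^ 2 <= c ^ 2 * (1 + IZR b ^ 2) -> jbr a <= c * jbr b.
Proof. intros Hc H. unfold jbr. rewrite <- (sqrt_pow2 c Hc) at 1. rewrite <- sqrt_mult.
  apply sqrt_le_1_alt; auto. nra. pose proof (pow2_ge_0 (IZR b)). lra. Qed.

Lemma Rabs_le_inv a b : Rabs a <= b -> - b <= a <= b.
Proof. unfold Rabs. destruct (Rcase_abs a); lra. Qed.

Definition wt (s : R) (k : Z) : R := Rpower (jbr k) s.

Lemma wt_pos s k : 0 < wt s k.
Proof. apply Rpower_pos. Qed.

Lemma wt_plus a b k : wt (a + b) k = wt a k * wt b k.
Proof. unfold wt. apply Rpower_plus. Qed.

Lemma wt_0 k : wt 0 k = 1.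
Proof. unfold wt. apply Rpower_O, jbr_pos. Qed.

Lemma wt_1 k : wt 1 k = jbr k.
Proof. unfold wt. apply Rpower_1, jbr_pos. Qed.

Lemma wt_2 k : wt 2 k = 1 + IZR k ^ 2.
Proof. unfold wt. replace 2 with (INR 2) by (simpl; lra). rewrite Rpower_pow by apply jbr_pos.
  apply jbr_sq. Qed.

Lemma wt_opp a k : wt (- a) k = / wt a k.
Proof. unfold wt. apply Rpower_Ropp. Qed.

Lemma wt_mono a b k : a <= b -> wt a k <= wt b k.
Proof. intros. unfold wt. apply Rle_Rpower; auto. apply jbr_ge1. Qed.

Lemma wt_ge1 a k : 0 <= a -> 1 <= wt a k.
Proof. intros. rewrite <- (wt_0 k). apply wt_mono; auto. Qed.

Lemma wt_le1 a k : a <= 0 -> wt a k <= 1.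
Proof. intros. rewrite <- (wt_0 k). apply wt_mono; auto. Qed.

Lemma wt_zopp a k : wt a (- k) = wt a k.
Proof. unfold wt. rewrite jbr_opp. auto. Qed.

Lemma wt_zabs a k : wt a (Z.abs k) = wt a k.
Proof. unfold wt. rewrite jbr_abs. auto. Qed.

Lemma rp_bound u v w t : 0 < u -> 0 < v -> 0 < w -> u <= v * w -> 0 <= t ->
  Rpower u t <= Rpower v t * Rpower w t.
Proof. intros. rewrite Rpower_mult_distr by auto. apply Rle_Rpower_l; auto. Qed.

Lemma rp_c2 c t : 1 <= c -> t <= 2 -> Rpower c t <= c ^ 2.
Proof. intros. replace (c ^ 2) with (Rpower c (INR 2)) by (apply Rpower_pow; lra).
  apply Rle_Rpower; auto. Qed.

Lemma rp_neg x s : Rpower x s = / Rpower x (- s).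
Proof. rewrite <- Rpower_Ropp, Ropp_involutive. auto. Qed.

Lemma inv_le_helper A B k : 0 < A -> 0 < B -> B <= k * A -> / A <= k * / B.
Proof. intros HA HB H. apply (Rmult_le_reg_l (A * B)). nra.
  replace (A * B * / A) with B by (field; lra). replace (A * B * (k * / B)) with (k * A) by (field; lra). lra. Qed.

Lemma wt_cmp s a b c : 1 <= c -> Rabs s <= 2 -> jbr a <= c * jbr b -> jbr b <= c * jbr a ->
  wt s a <= c ^ 2 * wt s b.
Proof. intros Hc Hs H1 H2. unfold wt. pose proof (jbr_pos a). pose proof (jbr_pos b).
  destruct (Rle_or_lt 0 s).
  - eapply Rle_trans. apply (rp_bound _ c (jbr b)); auto; lra.
    apply Rmult_le_compat_r. apply Rlt_le, Rpower_pos. apply rp_c2; auto. apply Rabs_le_inv in Hs; lra.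
  - rewrite !(rp_neg _ s).
    assert (Rpower (jbr b) (-s) <= Rpower c (-s) * Rpower (jbr a) (-s)) by (apply rp_bound; auto; lra).
    assert (Rpower c (- s) <= c ^ 2) by (apply rp_c2; auto; apply Rabs_le_inv in Hs; lra).
    pose proof (Rpower_pos (jbr a) (-s)). pose proof (Rpower_pos (jbr b) (-s)).
    pose proof (Rpower_pos c (-s)).
    apply inv_le_helper; auto. nra.
Qed.

Lemma sqrt2_facts : 1 <= sqrt 2 /\ sqrt 2 * sqrt 2 = 2.
Proof. split. rewrite <- sqrt_1 at 1. apply sqrt_le_1_alt. lra. apply sqrt_sqrt. lra. Qed.

Lemma jbr_sum_le x y : jbr (x + y) <= sqrt 2 * (jbr x * jbr y).
Proof. unfold jbr at 1. rewrite plus_IZR.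
  assert (Hx := jbr_sq x). assert (Hy := jbr_sq y). pose proof (jbr_pos x). pose proof (jbr_pos y).
  rewrite <- (sqrt_pow2 (jbr x * jbr y)) by nra. rewrite <- sqrt_mult by nra.
  apply sqrt_le_1_alt. pose proof (pow2_ge_0 (IZR x)). pose proof (pow2_ge_0 (IZR y)).
  replace ((jbr x * jbr y) ^ 2) with (jbr x ^ 2 * jbr y ^ 2) by ring. rewrite Hx, Hy.
  assert (0 <= (IZR x - IZR y)^2) by apply pow2_ge_0. nra.
Qed.

Lemma peetre s x y : Rabs s <= 1 -> wt s (x + y) <= 2 * wt s x * jbr y.
Proof. intros Hs. apply Rabs_le_inv in Hs. unfold wt.
  destruct sqrt2_facts as [S1 S2].
  pose proof (jbr_pos x). pose proof (jbr_pos y). pose proof (jbr_pos (x+y)). pose proof (jbr_ge1 y).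
  assert (Hsq : Rpower (sqrt 2) (Rabs s) <= 2).
  { eapply Rle_trans. apply rp_c2; auto. apply Rabs_le; lra. simpl. lra. }
  assert (Hyy : Rpower (jbr y) (Rabs s) <= jbr y).
  { rewrite <- (Rpower_1 (jbr y)) at 2 by auto. apply Rle_Rpower; auto. apply Rabs_le; lra. }
  destruct (Rle_or_lt 0 s).
  - rewrite Rabs_right in Hsq, Hyy by lra.
    eapply Rle_trans. apply (rp_bound _ (sqrt 2) (jbr x * jbr y)); try nra. apply jbr_sum_le.
    rewrite <- Rpower_mult_distr by auto.
    pose proof (Rpower_pos (sqrt 2) s). pose proof (Rpower_pos (jbr x) s). pose proof (Rpower_pos (jbr y) s).
    assert (Rpower (sqrt 2) s * Rpower (jbr y) s <= 2 * jbr y) by (apply Rmult_le_compat; lra).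
    replace (Rpower (sqrt 2) s * (Rpower (jbr x) s * Rpower (jbr y) s)) with
      (Rpower (jbr x) s * (Rpower (sqrt 2) s * Rpower (jbr y) s)) by ring.
    replace (2 * Rpower (jbr x) s * jbr y) with (Rpower (jbr x) s * (2 * jbr y)) by ring.
    apply Rmult_le_compat_l; lra.
  - rewrite Rabs_left in Hsq, Hyy by lra.
    rewrite !(rp_neg _ s).
    assert (jbr x <= sqrt 2 * (jbr (x + y) * jbr y)).
    { replace x with ((x + y) + (- y))%Z at 1 by ring. rewrite <- (jbr_opp y). apply jbr_sum_le. }
    assert (Rpower (jbr x) (-s) <= Rpower (sqrt 2) (-s) * (Rpower (jbr (x+y)) (-s) * Rpower (jbr y) (-s))).
    { rewrite Rpower_mult_distr by nra. apply rp_bound; try nra. }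
    pose proof (Rpower_pos (sqrt 2) (-s)). pose proof (Rpower_pos (jbr x) (-s)).
    pose proof (Rpower_pos (jbr y) (-s)). pose proof (Rpower_pos (jbr (x+y)) (-s)).
    rewrite Rmult_assoc, (Rmult_comm (/ _)), <- Rmult_assoc. apply inv_le_helper; auto.
    assert (Rpower (sqrt 2) (-s) * Rpower (jbr y) (-s) <= 2 * jbr y) by (apply Rmult_le_compat; lra).
    eapply Rle_trans. apply H5.
    replace (Rpower (sqrt 2) (-s) * (Rpower (jbr (x+y)) (-s) * Rpower (jbr y) (-s))) with
      (Rpower (jbr (x+y)) (-s) * (Rpower (sqrt 2) (-s) * Rpower (jbr y) (-s))) by ring.
    rewrite (Rmult_comm (2 * jbr y)). apply Rmult_le_compat_l; lra.
Qed.


Lemma exp_le_mono x y : x <= y -> exp x <= exp y.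
Proof. intros [H|H]; [apply Rlt_le, exp_increasing; auto| subst; lra]. Qed.

Lemma ln_le_minus1 y : 0 < y -> ln y <= y - 1.
Proof. intros Hy. destruct (Rle_or_lt (ln y) (y - 1)); auto.
  apply exp_increasing in H. rewrite exp_ln in H by auto. pose proof (exp_ineq1_le (y - 1)). lra. Qed.

Lemma Rpower_1_base y : Rpower 1 y = 1.
Proof. unfold Rpower. rewrite ln_1, Rmult_0_r. apply exp_0. Qed.

Lemma rp_split x a : 0 < x -> Rpower x a = Rpower (x + 1) a * Rpower (x / (x + 1)) a.
Proof. intros. rewrite Rpower_mult_distr. f_equal. field. lra. lra. apply Rdiv_lt_0_compat; lra. Qed.

Lemma rp_m1 x : 0 < x -> Rpower x (-1) = / x.
Proof. intros. replace (-1) with (- (1)) by ring. rewrite Rpower_Ropp, Rpower_1; auto. Qed.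

Lemma K1 a x : 0 < a -> 0 < x ->
  Rpower (x + 1) (- (a + 1)) <= (Rpower x (- a) - Rpower (x + 1) (- a)) / a.
Proof. intros Ha Hx. set (u := / (x + 1)).
  assert (Hu : 0 < u) by (apply Rinv_0_lt_compat; lra).
  assert (Hq : x / (x + 1) = 1 - u) by (unfold u; field; lra).
  rewrite (rp_split x (-a)) by auto. rewrite Hq.
  assert (HQ : 1 + a * u <= Rpower (1 - u) (- a)).
  { unfold Rpower. eapply Rle_trans. 2: apply exp_ineq1_le.
    assert (ln (1 - u) <= - u). { assert (0 < x / (x+1)) by (apply Rdiv_lt_0_compat; lra).
      pose proof (ln_le_minus1 _ H). rewrite Hq in H0. lra. }
    nra. }
  replace (- (a + 1)) with (- a + - 1) by ring. rewrite Rpower_plus, rp_m1 by lra.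
  fold u. pose proof (Rpower_pos (x+1) (-a)).
  set (R0 := Rpower (x + 1) (- a)) in *. set (Q := Rpower (1 - u) (- a)) in *.
  replace ((R0 * Q - R0) / a) with (R0 * ((Q - 1) * / a)) by (field; lra).
  apply Rmult_le_compat_l; [lra|].
  replace u with ((a * u) * / a) at 1 by (field; lra).
  apply Rmult_le_compat_r. apply Rlt_le, Rinv_0_lt_compat; auto. lra.
Qed.

Lemma K2 b x : 0 < b < 1 -> 0 < x ->
  Rpower (x + 1) (b - 1) <= 2 / b * (Rpower (x + 1) b - Rpower x b).
Proof. intros Hb Hx. set (u := / (x + 1)).
  assert (Hu : 0 < u) by (apply Rinv_0_lt_compat; lra).
  assert (Hu1 : u < 1). { unfold u. rewrite <- Rinv_1. apply Rinv_lt_contravar; lra. }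
  assert (Hq : x / (x + 1) = 1 - u) by (unfold u; field; lra).
  rewrite (rp_split x b) by auto. rewrite Hq.
  assert (HQ : Rpower (1 - u) b <= 1 - b * u / 2).
  { unfold Rpower.
    assert (ln (1 - u) <= - u). { assert (0 < x / (x+1)) by (apply Rdiv_lt_0_compat; lra).
      pose proof (ln_le_minus1 _ H). rewrite Hq in H0. lra. }
    eapply Rle_trans. apply exp_le_mono. apply (Rmult_le_compat_l b _ _ (Rlt_le _ _ (proj1 Hb)) H).
    replace (b * - u) with (- (b * u)) by ring. rewrite exp_Ropp.
    pose proof (exp_ineq1_le (b * u)). assert (0 < b * u) by nra. assert (b * u < 1) by nra.
    apply (Rmult_le_reg_l (exp (b * u))). apply exp_pos. rewrite Rinv_r by (apply Rgt_not_eq, exp_pos).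
    nra. }
  replace (b - 1) with (b + - 1) by ring. rewrite Rpower_plus, rp_m1 by lra.
  fold u. pose proof (Rpower_pos (x+1) b).
  apply (Rmult_le_reg_l (b / 2)). lra.
  replace (b / 2 * (2 / b * (Rpower (x + 1) b - Rpower (x + 1) b * Rpower (1 - u) b)))
    with (Rpower (x + 1) b - Rpower (x + 1) b * Rpower (1 - u) b) by (field; lra).
  nra.
Qed.

Lemma T1 a N : 0 < a ->
  sum_nat_R N (fun j => Rpower (INR (S j)) (- (a + 1))) <= 1 + / a.
Proof. intros Ha.
  assert (H : forall N, (1 <= N)%nat ->
     sum_nat_R N (fun j => Rpower (INR (S j)) (- (a + 1))) <= 1 + / a - Rpower (INR N) (- a) / a).
  { intros M HM. induction HM.
    - simpl. rewrite !Rpower_1_base. unfold Rdiv. rewrite Rmult_1_l. lra.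
    - rewrite snR_S. pose proof (K1 a (INR m) Ha). rewrite <- S_INR in H.
      assert (0 < INR m) by (apply lt_0_INR; lia). specialize (H H0).
      rewrite S_INR. rewrite S_INR in H. unfold Rdiv in *. lra. }
  destruct N. simpl. pose proof (Rinv_0_lt_compat a Ha). lra.
  pose proof (H (S N) ltac:(lia)). pose proof (Rpower_pos (INR (S N)) (-a)).
  assert (0 < Rpower (INR (S N)) (- a) / a) by (apply Rdiv_lt_0_compat; auto). lra.
Qed.

Lemma T2 b N : 0 < b < 1 -> (1 <= N)%nat ->
  sum_nat_R N (fun j => Rpower (INR (S j)) (b - 1)) <= 2 / b * Rpower (INR N) b.
Proof. intros Hb HN. induction HN.
  - simpl. rewrite !Rpower_1_base. apply (Rmult_le_reg_l b). lra. field_simplify; lra.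
  - rewrite snR_S. assert (0 < INR m) by (apply lt_0_INR; lia).
    pose proof (K2 b (INR m) Hb H). rewrite <- S_INR in H0. lra.
Qed.

Lemma INR_le_jbr N : INR N <= jbr (Z.of_nat N).
Proof. pose proof (jbr_ge_abs (Z.of_nat N)). rewrite <- INR_IZR_INZ in H.
  rewrite Rabs_right in H; auto. apply Rle_ge, pos_INR. Qed.

Lemma rp_anti u v t : 0 < u -> u <= v -> 0 <= t -> Rpower v (- t) <= Rpower u (- t).
Proof. intros. rewrite !Rpower_Ropp. apply Rinv_le_contravar. apply Rpower_pos.
  apply Rle_Rpower_l; auto. Qed.

Lemma wt_S_le sg j : sg <= 0 -> wt sg (Z.of_nat (S j)) <= Rpower (INR (S j)) sg.
Proof. intros. unfold wt. replace sg with (- (- sg)) by ring. apply rp_anti.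
  apply lt_0_INR; lia. apply INR_le_jbr. lra. Qed.

Lemma wt_even sg : forall n, wt sg (- n) = wt sg n.
Proof. intros; apply wt_zopp. Qed.

Lemma jbr_0 : jbr 0 = 1.
Proof. unfold jbr. simpl. replace (1 + 0 * (0 * 1)) with 1 by ring. apply sqrt_1. Qed.

Lemma wt_at0 sg : wt sg 0 = 1.
Proof. unfold wt. rewrite jbr_0. apply Rpower_1_base. Qed.

Lemma P1sum g : 1 < g -> exists C, 0 < C /\ forall K, sumZ_R K (wt (- g)) <= C.
Proof. intros Hg. exists (1 + 2 * (1 + / (g - 1))). split.
  pose proof (Rinv_0_lt_compat (g-1)). lra.
  intros K. rewrite sZ_half by apply wt_even. rewrite wt_at0.
  assert (sum_nat_R K (fun j => wt (- g) (Z.of_nat (S j))) <= 1 + / (g - 1)).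
  { eapply Rle_trans. apply snR_le. intros j _. apply wt_S_le. lra.
    replace (- g) with (- ((g - 1) + 1)) by ring. apply T1. lra. }
  lra.
Qed.

Lemma P3neg sg : -1 < sg < 0 -> exists C, 0 < C /\ forall N,
  sumZ_R N (wt sg) <= C * wt (1 + sg) (Z.of_nat N).
Proof. intros Hs. set (b := 1 + sg). assert (Hb : 0 < b < 1) by (unfold b; lra).
  exists (1 + 4 / b). split. assert (0 < 4 / b) by (apply Rdiv_lt_0_compat; lra). lra.
  intros N. rewrite sZ_half by apply wt_even. rewrite wt_at0.
  assert (H1 : 1 <= wt b (Z.of_nat N)) by (apply wt_ge1; lra).
  assert (0 < 4 / b) by (apply Rdiv_lt_0_compat; lra).
  destruct N. change (sum_nat_R 0 (fun j => wt sg (Z.of_nat (S j)))) with 0. nra.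
  assert (sum_nat_R (S N) (fun j => wt sg (Z.of_nat (S j))) <= 2 / b * Rpower (INR (S N)) b).
  { eapply Rle_trans. apply snR_le. intros j _. apply wt_S_le. lra.
    replace sg with (b - 1) by (unfold b; ring). apply T2; auto. lia. }
  assert (Rpower (INR (S N)) b <= wt b (Z.of_nat (S N))).
  { unfold wt. apply Rle_Rpower_l. lra. split. apply lt_0_INR; lia. apply INR_le_jbr. }
  unfold Rdiv in *. nra.
Qed.

Lemma P3pos sg : 0 <= sg -> forall N, sumZ_R N (wt sg) <= 3 * wt (1 + sg) (Z.of_nat N).
Proof. intros Hs N. eapply Rle_trans. apply (sZ_const_le N _ (wt sg (Z.of_nat N))).
  - intros n Hn. unfold wt. apply Rle_Rpower_l; auto. split. apply jbr_pos.
    rewrite <- (Rmult_1_l (jbr (Z.of_nat N))). apply jbr_le_of_sq. lra. rewrite pow1, Rmult_1_l. unfold inW in Hn.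
    assert (IZR n ^ 2 <= IZR (Z.of_nat N) ^ 2).
    { rewrite <- !Rsqr_pow2. apply Rsqr_le_abs_1. rewrite !Rabs_Zabs. apply IZR_le. lia. }
    lra.
  - rewrite wt_plus, wt_1. pose proof (INR_le_jbr N). pose proof (jbr_ge1 (Z.of_nat N)).
    pose proof (wt_pos sg (Z.of_nat N)). rewrite plus_INR, mult_INR. simpl. nra.
Qed.

Lemma P3 sg : -1 < sg -> exists C, 0 < C /\ forall N,
  sumZ_R N (wt sg) <= C * wt (1 + sg) (Z.of_nat N).
Proof. intros Hs. destruct (Rlt_or_le sg 0).
  - apply P3neg; lra.
  - exists 3. split. lra. apply P3pos; auto.
Qed.


Lemma jbr_le2 a b : (Z.abs a <= 2 * Z.abs b)%Z -> jbr a <= 2 * jbr b.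
Proof. intros H. apply jbr_le_of_sq. lra.
  assert (a * a <= 4 * (b * b))%Z by nia.
  apply IZR_le in H0. rewrite mult_IZR, mult_IZR, mult_IZR in H0. simpl in H0. simpl. lra. Qed.

Lemma wt_cmp2 sg a b : Rabs sg <= 2 -> (Z.abs a <= 2 * Z.abs b)%Z -> (Z.abs b <= 2 * Z.abs a)%Z ->
  wt sg a <= 4 * wt sg b.
Proof. intros. replace 4 with (2 ^ 2) by ring. apply wt_cmp; try lra; apply jbr_le2; auto. Qed.

Lemma ind_le_val a b : ind_le a b = if Z.leb a b then 1 else 0.
Proof. reflexivity. Qed.

Lemma Rabs_le2 x : -2 <= x <= 2 -> Rabs x <= 2.
Proof. intros. apply Rabs_le. lra. Qed.

Lemma J_bound s : 0 < s < 1/2 -> exists M, 0 < M /\ forall K2 q,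
  sumZ_R K2 (fun p => wt (4*s-1) (p + q) * ind_le (Z.abs p) (Z.abs q) / (wt (2*s) p * wt (2*s) q)) <= M.
Proof. intros Hs.
  destruct (P3 (-(2*s)) ltac:(lra)) as [C3 [HC3 H3]].
  destruct (P3 (4*s-1) ltac:(lra)) as [C4 [HC4 H4]].
  exists (4 * C3 + 16 * C4). split. lra. intros K2 q.
  set (N := Z.abs_nat q). assert (HN : Z.of_nat N = Z.abs q) by (unfold N; lia).
  pose proof (wt_pos (2*s) q). pose proof (wt_pos (4*s-1) q).
  set (t1 := fun p => 4 * wt (4*s-1) q * / wt (2*s) q * (wt (- (2*s)) p * ind_le (Z.abs p) (Z.of_nat N))).
  set (t2 := fun p => 4 * wt (-(4*s)) q * (wt (4*s-1) (p + q) * ind_le (Z.abs p) (Z.of_nat N))).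
  eapply Rle_trans with (sumZ_R K2 (fun p => t1 p + t2 p)).
  { apply sZ_le. intros p _. unfold t1, t2. rewrite HN. rewrite !ind_le_val.
    pose proof (wt_pos (2*s) p). pose proof (wt_pos (4*s-1) (p+q)). pose proof (wt_pos (-(4*s)) q).
    pose proof (wt_pos (-(2*s)) p).
    destruct (Z.leb_spec (Z.abs p) (Z.abs q)).
    - destruct (Z.le_gt_cases (2 * Z.abs p) (Z.abs q)).
      + assert (wt (4*s-1) (p+q) <= 4 * wt (4*s-1) q) by (apply wt_cmp2; try lia; apply Rabs_le2; lra).
        assert (0 <= 4 * wt (- (4 * s)) q * (wt (4 * s - 1) (p + q) * 1)) by nra.
        rewrite wt_opp. unfold Rdiv. rewrite Rinv_mult, Rmult_1_r.
        pose proof (Rinv_0_lt_compat _ H). pose proof (Rinv_0_lt_compat _ H1).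
        apply Rle_trans with (4 * wt (4 * s - 1) q * / wt (2 * s) q * (/ wt (2 * s) p * 1)).
        2: lra. rewrite Rmult_1_r.
        replace (wt (4 * s - 1) (p + q) * (/ wt (2 * s) p * / wt (2 * s) q)) with
          (wt (4 * s - 1) (p + q) * (/ wt (2 * s) q * / wt (2 * s) p)) by ring.
        rewrite <- !Rmult_assoc. apply Rmult_le_compat_r; [lra|]. apply Rmult_le_compat_r; [lra|]. lra.
      + assert (wt (-(2*s)) p <= 4 * wt (-(2*s)) q) by (apply wt_cmp2; try lia; apply Rabs_le2; lra).
        rewrite !wt_opp in *. unfold Rdiv. rewrite Rinv_mult, !Rmult_1_r.
        replace (/ wt (4 * s) q) with (/ wt (2*s) q * / wt (2*s) q).
        2:{ replace (4*s) with (2*s + 2*s) by ring. rewrite wt_plus, Rinv_mult. auto. }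
        pose proof (Rinv_0_lt_compat _ H). pose proof (Rinv_0_lt_compat _ H1).
        set (A := / wt (2*s) p) in *. set (B := / wt (2*s) q) in *. set (W := wt (4*s-1) (p+q)) in *.
        assert (W * A * B <= 4 * B * (W * B)).
        { replace (W * A * B) with ((W * B) * A) by ring. replace (4 * B * (W * B)) with ((W * B) * (4 * B)) by ring.
          apply Rmult_le_compat_l; nra. }
        assert (0 <= 4 * wt (4*s-1) q * B * A) by (repeat apply Rmult_le_pos; lra). lra.
    - unfold Rdiv. rewrite !Rmult_0_r, Rmult_0_l.
      pose proof (Rinv_0_lt_compat _ H). pose proof (Rinv_0_lt_compat _ H1).
      destruct (Z.leb_spec (Z.abs p) (Z.abs q)); [lia|]. lra. }
  rewrite sZ_plus. unfold t1, t2. rewrite !sZ_scal.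
  assert (S1 : sumZ_R K2 (fun p => wt (- (2 * s)) p * ind_le (Z.abs p) (Z.of_nat N)) <= C3 * wt (1 + - (2*s)) q).
  { eapply Rle_trans. apply sZ_restrict. intros; apply Rlt_le, wt_pos.
    rewrite <- (wt_zabs _ q), <- HN. apply H3. }
  assert (S2 : sumZ_R K2 (fun p => wt (4 * s - 1) (p + q) * ind_le (Z.abs p) (Z.of_nat N)) <= C4 * (4 * wt (4*s) q)).
  { eapply Rle_trans. apply (sZ_restrict K2 N (fun p => wt (4 * s - 1) (p + q))). intros; apply Rlt_le, wt_pos.
    eapply Rle_trans. apply (sZ_shift_le N (2 * N) q (wt (4*s-1))). intros; apply Rlt_le, wt_pos. lia.
    eapply Rle_trans. apply H4. apply Rmult_le_compat_l. lra.
    replace (1 + (4 * s - 1)) with (4 * s) by ring. apply wt_cmp2. apply Rabs_le2; lra. lia. lia. }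
  assert (E1 : wt (4 * s - 1) q * / wt (2 * s) q * wt (1 + - (2 * s)) q = 1).
  { rewrite <- wt_opp. rewrite <- !wt_plus. replace (4 * s - 1 + - (2 * s) + (1 + - (2 * s))) with 0 by ring.
    apply wt_0. }
  assert (E2 : wt (- (4 * s)) q * wt (4 * s) q = 1).
  { rewrite <- wt_plus. replace (- (4 * s) + 4 * s) with 0 by ring. apply wt_0. }
  pose proof (wt_pos (-(4*s)) q). pose proof (wt_pos (4*s) q). pose proof (Rinv_0_lt_compat _ H).
  assert (4 * wt (4 * s - 1) q * / wt (2 * s) q * sumZ_R K2 (fun p => wt (- (2 * s)) p * ind_le (Z.abs p) (Z.of_nat N))
     <= 4 * C3).
  { replace (4 * C3) with (4 * wt (4 * s - 1) q * / wt (2 * s) q * (C3 * wt (1 + - (2*s)) q)).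
    2:{ replace (4 * wt (4 * s - 1) q * / wt (2 * s) q * (C3 * wt (1 + - (2 * s)) q)) with
         (4 * C3 * (wt (4 * s - 1) q * / wt (2 * s) q * wt (1 + - (2 * s)) q)) by ring. rewrite E1. ring. }
    apply Rmult_le_compat_l; auto. nra. }
  assert (4 * wt (- (4 * s)) q * sumZ_R K2 (fun p => wt (4 * s - 1) (p + q) * ind_le (Z.abs p) (Z.of_nat N))
     <= 16 * C4).
  { replace (16 * C4) with (4 * wt (- (4 * s)) q * (C4 * (4 * wt (4*s) q))).
    2:{ replace (4 * wt (- (4 * s)) q * (C4 * (4 * wt (4 * s) q))) with (16 * C4 * (wt (- (4 * s)) q * wt (4 * s) q)) by ring.
        rewrite E2. ring. }
    apply Rmult_le_compat_l; auto. nra. }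
  lra.
Qed.

Lemma Kernel s : 0 < s < 1/2 -> exists M0, 0 < M0 /\ forall K1 K2 q,
  sumZ_R K1 (fun a => sumZ_R K2 (fun p =>
     wt (4*s-1) (a + p + q) * ind_le (Z.abs p) (Z.abs q) /
       ((1 + IZR a ^ 2) * wt (2*s) a * wt (2*s) p * wt (2*s) q))) <= M0.
Proof. intros Hs.
  destruct (P1sum (1 + 2*s) ltac:(lra)) as [C1 [HC1 H1]].
  destruct (J_bound s Hs) as [M [HM HJ]].
  exists (2 * C1 * M). split. nra. intros K1 K2 q.
  set (j := fun p => wt (4*s-1) (p + q) * ind_le (Z.abs p) (Z.abs q) / (wt (2*s) p * wt (2*s) q)).
  apply Rle_trans with (sumZ_R K1 (fun a => 2 * wt (- (1 + 2*s)) a * sumZ_R K2 j)).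
  { apply sZ_le. intros a _. rewrite <- sZ_scal. apply sZ_le. intros p _. unfold j.
    pose proof (wt_pos (2*s) a). pose proof (wt_pos (2*s) p). pose proof (wt_pos (2*s) q).
    pose proof (jbr_pos a). pose proof (ind_le_range (Z.abs p) (Z.abs q)).
    assert (Hp : wt (4 * s - 1) (a + p + q) <= 2 * wt (4*s-1) (p + q) * jbr a).
    { replace (a + p + q)%Z with ((p + q) + a)%Z by ring. apply peetre. apply Rabs_le; lra. }
    assert (Ha : 1 + IZR a ^ 2 = jbr a * jbr a). { rewrite <- jbr_sq. ring. }
    assert (Hw : wt (- (1 + 2 * s)) a = / (jbr a * wt (2 * s) a)).
    { rewrite wt_opp, wt_plus, wt_1. auto. }
    rewrite Ha, Hw.
    set (W := wt (4 * s - 1) (p + q)) in *. set (I := ind_le (Z.abs p) (Z.abs q)) in *.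
    set (J := jbr a) in *. set (ra := wt (2*s) a) in *. set (rp := wt (2*s) p) in *. set (rq := wt (2*s) q) in *.
    replace (2 * / (J * ra) * (W * I / (rp * rq))) with ((2 * W * J) * I / (J * J * ra * rp * rq)) by (field; lra).
    unfold Rdiv. apply Rmult_le_compat_r. apply Rlt_le, Rinv_0_lt_compat. repeat apply Rmult_lt_0_compat; lra.
    apply Rmult_le_compat_r; lra. }
  replace (sumZ_R K1 (fun a => 2 * wt (- (1 + 2 * s)) a * sumZ_R K2 j)) with
    (2 * sumZ_R K2 j * sumZ_R K1 (wt (- (1 + 2*s)))).
  2:{ rewrite <- sZ_scal. apply sZ_ext. intros; ring. }
  pose proof (HJ K2 q). fold j in H. pose proof (H1 K1).
  assert (0 <= sumZ_R K2 j). { apply sZ_nonneg. intros p _. unfold j.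
    pose proof (wt_pos (2*s) p). pose proof (wt_pos (2*s) q). pose proof (wt_pos (4*s-1) (p+q)).
    pose proof (ind_le_range (Z.abs p) (Z.abs q)). apply Rmult_le_pos. nra. apply Rlt_le, Rinv_0_lt_compat. nra. }
  assert (0 <= sumZ_R K1 (wt (- (1 + 2 * s)))) by (apply sZ_nonneg; intros; apply Rlt_le, wt_pos).
  apply Rle_trans with (2 * M * C1). 2: lra.
  apply Rmult_le_compat; lra.
Qed.


Lemma dCS K1 K2 t A B : (forall a c, 0 <= A a c) -> (forall a c, 0 <= B a c) ->
  (forall a c, t a c ^ 2 <= A a c * B a c) ->
  (sumZ_R K1 (fun a => sumZ_R K2 (t a))) ^ 2 <=
  sumZ_R K1 (fun a => sumZ_R K2 (A a)) * sumZ_R K1 (fun a => sumZ_R K2 (B a)).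
Proof. intros HA HB Ht. apply sZ_CS.
  - intros; apply sZ_nonneg; auto.
  - intros; apply sZ_nonneg; auto.
  - intros a. apply sZ_CS; auto.
Qed.

Lemma sZ_swap3 K K' F : sumZ_R K (fun n => sumZ_R K' (fun a => sumZ_R K' (fun c => F n a c))) =
  sumZ_R K' (fun a => sumZ_R K' (fun c => sumZ_R K (fun n => F n a c))).
Proof. rewrite sZ_swap. apply sZ_ext. intros a _. rewrite sZ_swap. auto. Qed.

Lemma sZ_shift_sub K K' a c g : (forall m, 0 <= g m) -> inW K' a -> inW K' c ->
  sumZ_R K (fun n => g (n - a - c)%Z) <= sumZ_R (K + 2 * K') g.
Proof. intros Hg Ha Hc. rewrite (sZ_ext K _ (fun n => g (n + (- (a + c)))%Z)).
  2:{ intros; f_equal; ring. }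
  apply sZ_shift_le; auto. unfold inW in *. lia. Qed.

Lemma sZ_nonneg_all K f : (forall n, 0 <= f n) -> 0 <= sumZ_R K f.
Proof. intros; apply sZ_nonneg; auto. Qed.

Definition Qf (x y z : Z -> R) (K' : nat) (n : Z) : R :=
  sumZ_R K' (fun a => sumZ_R K' (fun c => x a * y c * z (n - a - c)%Z / jbr a)).

Definition energy_le (s : R) (x : Z -> R) (E : R) : Prop :=
  (forall k, 0 <= x k) /\ (forall K, sumZ_R K (fun k => wt (2*s) k * x k ^ 2) <= E).

Lemma energy_E_nonneg s x E : energy_le s x E -> 0 <= E.
Proof. intros [Hx HE]. eapply Rle_trans. 2: apply (HE 0%nat). apply sZ_nonneg. intros.
  pose proof (wt_pos (2*s) n). pose proof (pow2_ge_0 (x n)). nra. Qed.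

Lemma ind_le_sq a b : ind_le a b ^ 2 = ind_le a b.
Proof. unfold ind_le, Defs.ind. destruct (Z.leb a b); ring. Qed.

Lemma ind_le_cover a b : 1 <= ind_le a b + ind_le b a.
Proof. unfold ind_le, Defs.ind. destruct (Z.leb_spec a b); destruct (Z.leb_spec b a); try lra; lia. Qed.

Definition KernelBound (s M0 : R) : Prop := forall K1 K2 q,
  sumZ_R K1 (fun a => sumZ_R K2 (fun p =>
     wt (4*s-1) (a + p + q) * ind_le (Z.abs p) (Z.abs q) /
       ((1 + IZR a ^ 2) * wt (2*s) a * wt (2*s) p * wt (2*s) q))) <= M0.

Lemma sum_prod_sep K1 K2 f g : sumZ_R K1 (fun a => sumZ_R K2 (fun c => f a * g c)) = sumZ_R K1 f * sumZ_R K2 g.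
Proof. transitivity (sumZ_R K1 (fun a => sumZ_R K2 g * f a)).
  apply sZ_ext. intros a _. rewrite Rmult_comm, <- sZ_scal. auto.
  rewrite sZ_scal. ring. Qed.

Lemma partA s x y z E M0 : 0 < s < 1/2 -> energy_le s x E -> energy_le s y E -> energy_le s z E ->
  KernelBound s M0 -> forall K K',
  sumZ_R K (fun n => wt (4*s-1) n * (sumZ_R K' (fun a => sumZ_R K' (fun c =>
     x a * y c * z (n - a - c)%Z * ind_le (Z.abs c) (Z.abs (n - a - c)) / jbr a))) ^ 2) <= M0 * E ^ 3.
Proof. intros Hs [Hx Ex] [Hy Ey] [Hz Ez] HK K K'.
  assert (HE : 0 <= E) by (eapply energy_E_nonneg; split; [apply Hx| apply Ex]).
  set (r := wt (2*s)).
  assert (Hr : forall k, 0 < r k) by (intros; apply wt_pos).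
  set (B := fun n a c => ind_le (Z.abs c) (Z.abs (n - a - c)) * z (n - a - c)%Z ^ 2 / ((1 + IZR a ^ 2) * r a * r c)).
  assert (HB : forall n a c, 0 <= B n a c).
  { intros. unfold B. pose proof (ind_le_range (Z.abs c) (Z.abs (n - a - c))). pose proof (pow2_ge_0 (z (n-a-c)%Z)).
    pose proof (pow2_ge_0 (IZR a)). pose proof (Hr a). pose proof (Hr c).
    apply Rmult_le_pos. nra. apply Rlt_le, Rinv_0_lt_compat. repeat apply Rmult_lt_0_compat; lra. }
  apply Rle_trans with (sumZ_R K (fun n => wt (4*s-1) n * (E ^ 2 * sumZ_R K' (fun a => sumZ_R K' (fun c => B n a c))))).
  { apply sZ_le. intros n _. apply Rmult_le_compat_l. apply Rlt_le, wt_pos.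
    eapply Rle_trans. apply (dCS K' K' _ (fun a c => r a * x a ^ 2 * (r c * y c ^ 2)) (B n)).
    - intros. pose proof (Hr a). pose proof (Hr c). pose proof (pow2_ge_0 (x a)). pose proof (pow2_ge_0 (y c)).
      apply Rmult_le_pos; apply Rmult_le_pos; lra.
    - intros; apply HB.
    - intros a c. unfold B. right.
      set (ch := ind_le (Z.abs c) (Z.abs (n - a - c))).
      assert (Hch : ch ^ 2 = ch) by apply ind_le_sq.
      replace (1 + IZR a ^ 2) with (jbr a ^ 2) by apply jbr_sq.
      pose proof (jbr_pos a). pose proof (Hr a). pose proof (Hr c).
      replace ((x a * y c * z (n - a - c)%Z * ch / jbr a) ^ 2) with
        ((x a * y c * z (n - a - c)%Z / jbr a) ^ 2 * ch ^ 2) by (field; lra).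
      rewrite Hch. field. repeat split; lra.
    - apply Rmult_le_compat_r. apply sZ_nonneg_all; intros; apply sZ_nonneg_all; auto.
      rewrite (sum_prod_sep K' K' (fun a => r a * x a ^ 2) (fun c => r c * y c ^ 2)).
      replace (E ^ 2) with (E * E) by ring.
      apply Rmult_le_compat; try apply sZ_nonneg_all; intros;
        try (pose proof (Hr n0); pose proof (pow2_ge_0 (x n0)); pose proof (pow2_ge_0 (y n0)); nra).
      apply Ex. apply Ey. }
  rewrite (sZ_ext K _ (fun n => E ^ 2 * sumZ_R K' (fun a => sumZ_R K' (fun c => wt (4*s-1) n * B n a c)))).
  2:{ intros n _. transitivity (E ^ 2 * (wt (4*s-1) n * sumZ_R K' (fun a => sumZ_R K' (fun c => B n a c)))).
      ring. f_equal. rewrite <- sZ_scal. apply sZ_ext. intros a _. rewrite <- sZ_scal. reflexivity. }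
  rewrite sZ_scal, sZ_swap3.
  set (h := fun a c m => wt (4*s-1) (a + c + m) * ind_le (Z.abs c) (Z.abs m) * z m ^ 2 / ((1 + IZR a ^ 2) * r a * r c)).
  assert (Hh : forall a c m, 0 <= h a c m).
  { intros. unfold h. pose proof (ind_le_range (Z.abs c) (Z.abs m)). pose proof (pow2_ge_0 (z m)).
    pose proof (pow2_ge_0 (IZR a)). pose proof (Hr a). pose proof (Hr c). pose proof (wt_pos (4*s-1) (a+c+m)).
    apply Rmult_le_pos. apply Rmult_le_pos; [|lra]. nra. apply Rlt_le, Rinv_0_lt_compat. repeat apply Rmult_lt_0_compat; lra. }
  apply Rle_trans with (E ^ 2 * sumZ_R K' (fun a => sumZ_R K' (fun c => sumZ_R (K + 2 * K') (h a c)))).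
  { apply Rmult_le_compat_l. apply pow2_ge_0. apply sZ_le. intros a Ha. apply sZ_le. intros c Hc.
    rewrite (sZ_ext K _ (fun n => h a c (n - a - c)%Z)).
    2:{ intros n _. unfold h, B. replace (a + c + (n - a - c))%Z with n by ring. field.
        pose proof (Hr a). pose proof (Hr c). pose proof (pow2_ge_0 (IZR a)). repeat split; lra. }
    apply sZ_shift_sub; auto. }
  assert (Eq : sumZ_R K' (fun a => sumZ_R K' (fun c => sumZ_R (K + 2*K') (h a c))) =
     sumZ_R (K + 2*K') (fun m => sumZ_R K' (fun a => sumZ_R K' (fun c => h a c m))))
    by (symmetry; apply sZ_swap3).
  rewrite Eq.
  apply Rle_trans with (E ^ 2 * sumZ_R (K + 2 * K') (fun m => r m * z m ^ 2 * M0)).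
  { apply Rmult_le_compat_l. apply pow2_ge_0. apply sZ_le. intros m _.
    rewrite (sZ_ext K' _ (fun a => r m * z m ^ 2 * sumZ_R K' (fun c =>
        wt (4*s-1) (a + c + m) * ind_le (Z.abs c) (Z.abs m) / ((1 + IZR a ^ 2) * r a * r c * r m)))).
    2:{ intros a _. rewrite <- sZ_scal. apply sZ_ext. intros c _. unfold h. field.
        pose proof (Hr a). pose proof (Hr c). pose proof (Hr m). pose proof (pow2_ge_0 (IZR a)). repeat split; lra. }
    rewrite sZ_scal. apply Rmult_le_compat_l. pose proof (Hr m). pose proof (pow2_ge_0 (z m)). nra.
    apply HK. }
  rewrite (sZ_ext _ _ (fun m => M0 * (r m * z m ^ 2))) by (intros; ring). rewrite sZ_scal.
  pose proof (Ez (K + 2 * K')%nat). fold r in H.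
  assert (0 <= M0). { eapply Rle_trans. 2: apply (HK 0%nat 0%nat 0%Z). apply sZ_nonneg_all. intros.
     apply sZ_nonneg_all. intros. pose proof (ind_le_range (Z.abs n0) (Z.abs 0)).
     pose proof (wt_pos (4*s-1) (n + n0 + 0)). pose proof (pow2_ge_0 (IZR n)).
     pose proof (wt_pos (2*s) n). pose proof (wt_pos (2*s) n0). pose proof (wt_pos (2*s) 0).
     apply Rmult_le_pos. nra. apply Rlt_le, Rinv_0_lt_compat. repeat apply Rmult_lt_0_compat; lra. }
  replace (M0 * E ^ 3) with (E ^ 2 * (M0 * E)) by ring.
  apply Rmult_le_compat_l. apply pow2_ge_0. apply Rmult_le_compat_l; auto.
Qed.

Lemma conv_energy K' n a g E : (forall m, 0 <= g m) -> (forall K, sumZ_R K g <= E) ->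
  sumZ_R K' (fun c => g (n - a - c)%Z) <= E.
Proof. intros Hg HE.
  assert (Eq : sumZ_R K' (fun c => g (n - a - c)%Z) = sumZ_R K' (fun c => g (c + (n - a))%Z)).
  { rewrite <- (sZ_reflect K' (fun c => g (c + (n - a))%Z)). apply sZ_ext; intros; f_equal; ring. }
  rewrite Eq. eapply Rle_trans. apply (sZ_shift_le K' (K' + Z.abs_nat (n - a)) (n - a) g); auto. lia.
  apply HE. Qed.

Lemma partB s x y z E M0 : 0 < s < 1/2 -> energy_le s x E -> energy_le s y E -> energy_le s z E ->
  KernelBound s M0 -> forall K K',
  sumZ_R K (fun n => wt (4*s-1) n * (sumZ_R K' (fun a => sumZ_R K' (fun c =>
     x a * y c * z (n - a - c)%Z * ind_le (Z.abs (n - a - c)) (Z.abs c) / jbr a))) ^ 2) <= M0 * E ^ 3.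
Proof. intros Hs [Hx Ex] [Hy Ey] [Hz Ez] HK K K'.
  assert (HE : 0 <= E) by (eapply energy_E_nonneg; split; [apply Hx| apply Ex]).
  set (r := wt (2*s)).
  assert (Hr : forall k, 0 < r k) by (intros; apply wt_pos).
  set (B := fun n a c => ind_le (Z.abs (n - a - c)) (Z.abs c) * y c ^ 2 / ((1 + IZR a ^ 2) * r a * r (n - a - c)%Z)).
  assert (HB : forall n a c, 0 <= B n a c).
  { intros. unfold B. pose proof (ind_le_range (Z.abs (n - a - c)) (Z.abs c)). pose proof (pow2_ge_0 (y c)).
    pose proof (pow2_ge_0 (IZR a)). pose proof (Hr a). pose proof (Hr (n - a - c)%Z).
    apply Rmult_le_pos. nra. apply Rlt_le, Rinv_0_lt_compat. repeat apply Rmult_lt_0_compat; lra. }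
  apply Rle_trans with (sumZ_R K (fun n => wt (4*s-1) n * (E ^ 2 * sumZ_R K' (fun a => sumZ_R K' (fun c => B n a c))))).
  { apply sZ_le. intros n _. apply Rmult_le_compat_l. apply Rlt_le, wt_pos.
    eapply Rle_trans. apply (dCS K' K' _ (fun a c => r a * x a ^ 2 * (r (n - a - c)%Z * z (n - a - c)%Z ^ 2)) (B n)).
    - intros. pose proof (Hr a). pose proof (Hr (n - a - c)%Z). pose proof (pow2_ge_0 (x a)). pose proof (pow2_ge_0 (z (n-a-c)%Z)).
      apply Rmult_le_pos; apply Rmult_le_pos; lra.
    - intros; apply HB.
    - intros a c. unfold B. right.
      set (ch := ind_le (Z.abs (n - a - c)) (Z.abs c)).
      assert (Hch : ch ^ 2 = ch) by apply ind_le_sq.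
      replace (1 + IZR a ^ 2) with (jbr a ^ 2) by apply jbr_sq.
      pose proof (jbr_pos a). pose proof (Hr a). pose proof (Hr (n - a - c)%Z).
      replace ((x a * y c * z (n - a - c)%Z * ch / jbr a) ^ 2) with
        ((x a * y c * z (n - a - c)%Z / jbr a) ^ 2 * ch ^ 2) by (field; lra).
      rewrite Hch. field. repeat split; lra.
    - apply Rmult_le_compat_r. apply sZ_nonneg_all; intros; apply sZ_nonneg_all; auto.
      apply Rle_trans with (sumZ_R K' (fun a => E * (r a * x a ^ 2))).
      + apply sZ_le. intros a _. rewrite sZ_scal, (Rmult_comm E). apply Rmult_le_compat_l.
        pose proof (Hr a). pose proof (pow2_ge_0 (x a)). nra.
        apply (conv_energy K' n a (fun m => r m * z m ^ 2)); auto.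
        intros. pose proof (Hr m). pose proof (pow2_ge_0 (z m)). nra.
      + rewrite sZ_scal. replace (E ^ 2) with (E * E) by ring. apply Rmult_le_compat_l; auto. }
  rewrite (sZ_ext K _ (fun n => E ^ 2 * sumZ_R K' (fun a => sumZ_R K' (fun c => wt (4*s-1) n * B n a c)))).
  2:{ intros n _. transitivity (E ^ 2 * (wt (4*s-1) n * sumZ_R K' (fun a => sumZ_R K' (fun c => B n a c)))).
      ring. f_equal. rewrite <- sZ_scal. apply sZ_ext. intros a _. rewrite <- sZ_scal. reflexivity. }
  rewrite sZ_scal, sZ_swap3.
  set (h := fun a c m => wt (4*s-1) (a + c + m) * ind_le (Z.abs m) (Z.abs c) * y c ^ 2 / ((1 + IZR a ^ 2) * r a * r m)).
  assert (Hh : forall a c m, 0 <= h a c m).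
  { intros. unfold h. pose proof (ind_le_range (Z.abs m) (Z.abs c)). pose proof (pow2_ge_0 (y c)).
    pose proof (pow2_ge_0 (IZR a)). pose proof (Hr a). pose proof (Hr m). pose proof (wt_pos (4*s-1) (a+c+m)).
    apply Rmult_le_pos. apply Rmult_le_pos; [|lra]. nra. apply Rlt_le, Rinv_0_lt_compat. repeat apply Rmult_lt_0_compat; lra. }
  apply Rle_trans with (E ^ 2 * sumZ_R K' (fun a => sumZ_R K' (fun c => sumZ_R (K + 2 * K') (h a c)))).
  { apply Rmult_le_compat_l. apply pow2_ge_0. apply sZ_le. intros a Ha. apply sZ_le. intros c Hc.
    rewrite (sZ_ext K _ (fun n => h a c (n - a - c)%Z)).
    2:{ intros n _. unfold h, B. replace (a + c + (n - a - c))%Z with n by ring. field.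
        pose proof (Hr a). pose proof (Hr (n - a - c)%Z). pose proof (pow2_ge_0 (IZR a)). repeat split; lra. }
    apply sZ_shift_sub; auto. }
  rewrite sZ_swap.
  apply Rle_trans with (E ^ 2 * sumZ_R K' (fun c => r c * y c ^ 2 * M0)).
  { apply Rmult_le_compat_l. apply pow2_ge_0. apply sZ_le. intros c _.
    rewrite (sZ_ext K' _ (fun a => r c * y c ^ 2 * sumZ_R (K + 2 * K') (fun m =>
        wt (4*s-1) (a + m + c) * ind_le (Z.abs m) (Z.abs c) / ((1 + IZR a ^ 2) * r a * r m * r c)))).
    2:{ intros a _. rewrite <- sZ_scal. apply sZ_ext. intros m _. unfold h.
        replace (a + m + c)%Z with (a + c + m)%Z by ring. field.
        pose proof (Hr a). pose proof (Hr c). pose proof (Hr m). pose proof (pow2_ge_0 (IZR a)). repeat split; lra. }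
    rewrite sZ_scal. apply Rmult_le_compat_l. pose proof (Hr c). pose proof (pow2_ge_0 (y c)). nra.
    apply HK. }
  rewrite (sZ_ext _ _ (fun m => M0 * (r m * y m ^ 2))) by (intros; ring). rewrite sZ_scal.
  pose proof (Ey K'). fold r in H.
  assert (0 <= M0). { eapply Rle_trans. 2: apply (HK 0%nat 0%nat 0%Z). apply sZ_nonneg_all. intros.
     apply sZ_nonneg_all. intros. pose proof (ind_le_range (Z.abs n0) (Z.abs 0)).
     pose proof (wt_pos (4*s-1) (n + n0 + 0)). pose proof (pow2_ge_0 (IZR n)).
     pose proof (wt_pos (2*s) n). pose proof (wt_pos (2*s) n0). pose proof (wt_pos (2*s) 0).
     apply Rmult_le_pos. nra. apply Rlt_le, Rinv_0_lt_compat. repeat apply Rmult_lt_0_compat; lra. }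
  replace (M0 * E ^ 3) with (E ^ 2 * (M0 * E)) by ring.
  apply Rmult_le_compat_l. apply pow2_ge_0. apply Rmult_le_compat_l; auto.
Qed.

Lemma Core s : 0 < s < 1/2 -> exists Mc, 0 < Mc /\ forall x y z E,
  energy_le s x E -> energy_le s y E -> energy_le s z E -> forall K K',
  sumZ_R K (fun n => wt (4*s-1) n * (Qf x y z K' n) ^ 2) <= Mc * E ^ 3.
Proof. intros Hs. destruct (Kernel s Hs) as [M0 [HM0 HK]].
  exists (4 * M0). split. lra. intros x y z E Ex Ey Ez K K'.
  pose proof (partA s x y z E M0 Hs Ex Ey Ez HK K K') as PA.
  pose proof (partB s x y z E M0 Hs Ex Ey Ez HK K K') as PB.
  destruct Ex as [Hx _]. destruct Ey as [Hy _]. destruct Ez as [Hz _].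
  set (QA := fun n => sumZ_R K' (fun a => sumZ_R K' (fun c =>
     x a * y c * z (n - a - c)%Z * ind_le (Z.abs c) (Z.abs (n - a - c)) / jbr a))) in PA.
  set (QB := fun n => sumZ_R K' (fun a => sumZ_R K' (fun c =>
     x a * y c * z (n - a - c)%Z * ind_le (Z.abs (n - a - c)) (Z.abs c) / jbr a))) in PB.
  apply Rle_trans with (sumZ_R K (fun n => 2 * (wt (4*s-1) n * QA n ^ 2) + 2 * (wt (4*s-1) n * QB n ^ 2))).
  2:{ rewrite sZ_plus, !sZ_scal. unfold QA, QB. cbv beta. lra. }
  apply sZ_le. intros n _.
  assert (Hterm : forall a c, 0 <= x a * y c * z (n - a - c)%Z / jbr a).
  { intros. pose proof (Hx a). pose proof (Hy c). pose proof (Hz (n-a-c)%Z). pose proof (jbr_pos a).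
    apply Rmult_le_pos. repeat apply Rmult_le_pos; lra. apply Rlt_le, Rinv_0_lt_compat; lra. }
  assert (H0 : 0 <= Qf x y z K' n) by (apply sZ_nonneg_all; intros; apply sZ_nonneg_all; intros; apply Hterm).
  assert (H1 : Qf x y z K' n <= QA n + QB n).
  { unfold QA, QB, Qf. rewrite <- sZ_plus. apply sZ_le. intros a _. rewrite <- sZ_plus. apply sZ_le. intros c _.
    pose proof (ind_le_cover (Z.abs c) (Z.abs (n - a - c))). pose proof (Hterm a c).
    set (t := x a * y c * z (n - a - c)%Z / jbr a) in *.
    replace (x a * y c * z (n - a - c)%Z * ind_le (Z.abs c) (Z.abs (n - a - c)) / jbr a) with
      (t * ind_le (Z.abs c) (Z.abs (n - a - c))) by (unfold t, Rdiv; ring).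
    replace (x a * y c * z (n - a - c)%Z * ind_le (Z.abs (n - a - c)) (Z.abs c) / jbr a) with
      (t * ind_le (Z.abs (n - a - c)) (Z.abs c)) by (unfold t, Rdiv; ring).
    rewrite <- Rmult_plus_distr_l. rewrite <- (Rmult_1_r t) at 1. apply Rmult_le_compat_l; lra. }
  assert (0 <= QA n) by (apply sZ_nonneg_all; intros; apply sZ_nonneg_all; intros;
     pose proof (Hterm n0 n1); pose proof (ind_le_range (Z.abs n1) (Z.abs (n - n0 - n1)));
     replace (x n0 * y n1 * z (n - n0 - n1)%Z * ind_le (Z.abs n1) (Z.abs (n - n0 - n1)) / jbr n0) with
      ((x n0 * y n1 * z (n - n0 - n1)%Z / jbr n0) * ind_le (Z.abs n1) (Z.abs (n - n0 - n1))) by (unfold Rdiv; ring); nra).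
  assert (0 <= QB n) by (apply sZ_nonneg_all; intros; apply sZ_nonneg_all; intros;
     pose proof (Hterm n0 n1); pose proof (ind_le_range (Z.abs (n - n0 - n1)) (Z.abs n1));
     replace (x n0 * y n1 * z (n - n0 - n1)%Z * ind_le (Z.abs (n - n0 - n1)) (Z.abs n1) / jbr n0) with
      ((x n0 * y n1 * z (n - n0 - n1)%Z / jbr n0) * ind_le (Z.abs (n - n0 - n1)) (Z.abs n1)) by (unfold Rdiv; ring); nra).
  pose proof (wt_pos (4*s-1) n).
  assert (Qf x y z K' n ^ 2 <= 2 * QA n ^ 2 + 2 * QB n ^ 2).
  { assert (Qf x y z K' n ^ 2 <= (QA n + QB n) ^ 2) by (apply pow_incr; lra).
    assert (0 <= (QA n - QB n) ^ 2) by apply pow2_ge_0. nra. }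
  nra.
Qed.


Definition Cabs (z : Cplx) : R := sqrt (Cnorm2 z).

Lemma Cnorm2_nonneg z : 0 <= Cnorm2 z.
Proof. unfold Cnorm2. pose proof (pow2_ge_0 (Cre z)). pose proof (pow2_ge_0 (Cim z)). lra. Qed.

Lemma Cabs_nonneg z : 0 <= Cabs z.
Proof. apply sqrt_pos. Qed.

Lemma Cabs_sq z : Cabs z ^ 2 = Cnorm2 z.
Proof. unfold Cabs. apply pow2_sqrt, Cnorm2_nonneg. Qed.

Lemma Cnorm2_mul z w : Cnorm2 (Cmul z w) = Cnorm2 z * Cnorm2 w.
Proof. destruct z, w. unfold Cnorm2, Cmul, Cre, Cim; simpl. ring. Qed.

Lemma Cabs_mul z w : Cabs (Cmul z w) = Cabs z * Cabs w.
Proof. unfold Cabs. rewrite Cnorm2_mul. apply sqrt_mult; apply Cnorm2_nonneg. Qed.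

Lemma Cabs_add z w : Cabs (Cadd z w) <= Cabs z + Cabs w.
Proof. pose proof (Cabs_sq z) as Hz. pose proof (Cabs_sq w) as Hw. pose proof (Cabs_sq (Cadd z w)) as Hzw.
  pose proof (Cabs_nonneg z). pose proof (Cabs_nonneg w). pose proof (Cabs_nonneg (Cadd z w)).
  destruct z as [a b], w as [c d]. unfold Cnorm2, Cadd, Cre, Cim in *; simpl fst in *; simpl snd in *.
  set (x := Cabs (a, b)) in *. set (y := Cabs (c, d)) in *. set (u := Cabs (a + c, b + d)) in *.
  assert (Hxy : a * c + b * d <= x * y).
  { assert ((a * c + b * d) ^ 2 <= (x * y) ^ 2).
    { replace ((x * y) ^ 2) with (x ^ 2 * y ^ 2) by ring. rewrite Hz, Hw.
      assert (0 <= (a*d - b*c)^2) by apply pow2_ge_0. nra. }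
    destruct (Rle_or_lt (a * c + b * d) (x * y)); auto. assert (0 <= x * y) by nra. nra. }
  assert (u ^ 2 <= (x + y) ^ 2) by nra.
  destruct (Rle_or_lt u (x + y)); auto. nra.
Qed.

Lemma Cabs_expi x : Cabs (Cexpi x) = 1.
Proof. unfold Cabs, Cnorm2, Cexpi, Cre, Cim. cbn [fst snd].
  pose proof (sin2_cos2 x). unfold Rsqr in H.
  replace (cos x ^ 2 + sin x ^ 2) with (sin x * sin x + cos x * cos x) by ring. rewrite H. apply sqrt_1. Qed.

Lemma Cabs_conj z : Cabs (Cconj z) = Cabs z.
Proof. unfold Cabs, Cnorm2, Cconj, Cre, Cim. cbn [fst snd]. f_equal. ring. Qed.

Lemma Cre_le z : Rabs (Cre z) <= Cabs z.
Proof. unfold Cabs, Cnorm2. rewrite <- sqrt_Rsqr_abs. apply sqrt_le_1_alt. unfold Rsqr.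
  pose proof (pow2_ge_0 (Cim z)). simpl. lra. Qed.

Lemma Cim_le z : Rabs (Cim z) <= Cabs z.
Proof. unfold Cabs, Cnorm2. rewrite <- sqrt_Rsqr_abs. apply sqrt_le_1_alt. unfold Rsqr.
  pose proof (pow2_ge_0 (Cre z)). simpl. lra. Qed.

Lemma Cre_sumC m f : Cre (sum_nat_C m f) = sum_nat_R m (fun j => Cre (f j)).
Proof. induction m; simpl; auto. unfold Cadd. simpl. rewrite <- IHm. auto. Qed.

Lemma Cim_sumC m f : Cim (sum_nat_C m f) = sum_nat_R m (fun j => Cim (f j)).
Proof. induction m; simpl; auto. unfold Cadd. simpl. rewrite <- IHm. auto. Qed.

Lemma Cabs_C0 : Cabs C0 = 0.
Proof. unfold Cabs, Cnorm2, C0, Cre, Cim; simpl. replace (0 * (0 * 1) + 0 * (0 * 1)) with 0 by ring. apply sqrt_0. Qed.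

Lemma Cabs_sumC m f : Cabs (sum_nat_C m f) <= sum_nat_R m (fun j => Cabs (f j)).
Proof. induction m; simpl. rewrite Cabs_C0. lra.
  eapply Rle_trans. apply Cabs_add. lra. Qed.

Lemma sZ_Cre K f : Cre (sumZ_C K f) = sumZ_R K (fun n => Cre (f n)).
Proof. apply Cre_sumC. Qed.
Lemma sZ_Cim K f : Cim (sumZ_C K f) = sumZ_R K (fun n => Cim (f n)).
Proof. apply Cim_sumC. Qed.
Lemma sZ_Cabs K f : Cabs (sumZ_C K f) <= sumZ_R K (fun n => Cabs (f n)).
Proof. apply Cabs_sumC. Qed.

Lemma Cnorm2_CofR r : Cnorm2 (CofR r) = r ^ 2.
Proof. unfold Cnorm2, CofR, Cre, Cim; simpl. ring. Qed.

Lemma Cnorm2_Ci : Cnorm2 Ci = 1.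
Proof. unfold Cnorm2, Ci, Cre, Cim; simpl. ring. Qed.

Lemma Cnorm2_div z w : 0 < Cnorm2 w -> Cnorm2 (Cdiv z w) = Cnorm2 z / Cnorm2 w.
Proof. intros H. unfold Cdiv. rewrite Cnorm2_mul. destruct w as [a b].
  unfold Cnorm2, Cinv, Cre, Cim in *; cbn [fst snd] in *. unfold Cnorm2, Cre, Cim; cbn [fst snd]. field. lra. Qed.

Lemma Cnorm2_hat k : (1 + IZR k ^ 2) / 2 <= Cnorm2 (hatZ k) /\ IZR k ^ 2 <= Cnorm2 (hatZ k).
Proof. unfold Cnorm2, hatZ, Cre, Cim; simpl. unfold Defs.ind.
  destruct (Z.eqb_spec k 0).
  - subst. simpl. lra.
  - assert (1 <= IZR k * IZR k). { rewrite <- mult_IZR. apply IZR_le. nia. } lra.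
Qed.

Lemma ind_cases b : Defs.ind b = 0 \/ Defs.ind b = 1.
Proof. unfold Defs.ind. destruct b; auto. Qed.

Ltac zero_tac := match goal with |- ?a <= _ => replace a with 0 by ring end; lra.

Lemma m1_bound n n1 n2 : Cnorm2 (m1 n n1 n2 (n - n1 - n2)) <= 8 * IZR n ^ 2 / (1 + IZR n2 ^ 2).
Proof. unfold m1. rewrite Cnorm2_mul, Cnorm2_CofR.
  destruct (Cnorm2_hat n1) as [A1 B1]. destruct (Cnorm2_hat n2) as [A2 B2].
  pose proof (pow2_ge_0 (IZR n1)). pose proof (pow2_ge_0 (IZR n2)).
  assert (P1 : 0 < Cnorm2 (hatZ n1)) by lra. assert (P2 : 0 < Cnorm2 (hatZ n2)) by lra.
  rewrite Cnorm2_div by (rewrite Cnorm2_mul; nra).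
  rewrite !Cnorm2_mul, !Cnorm2_CofR, Cnorm2_Ci.
  assert (R0 : 0 <= 8 * IZR n ^ 2 / (1 + IZR n2 ^ 2)).
  { apply Rmult_le_pos. pose proof (pow2_ge_0 (IZR n)). lra. apply Rlt_le, Rinv_0_lt_compat. lra. }
  unfold Defs.ind. destruct (Z.ltb_spec 0 n); [|zero_tac].
  destruct (Z.ltb_spec (n2 + (n - n1 - n2)) 0); [|zero_tac].
  destruct (Z.eqb (n - n1 - n2) 0); simpl negb; [zero_tac|].
  replace (n2 + (n - n1 - n2))%Z with (n - n1)%Z in * by ring.
  assert (Hn1 : IZR (n - n1) ^ 2 <= IZR n1 ^ 2).
  { replace (IZR (n - n1) ^ 2) with (IZR ((n - n1) * (n - n1))) by (rewrite mult_IZR; ring).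
    replace (IZR n1 ^ 2) with (IZR (n1 * n1)) by (rewrite mult_IZR; ring). apply IZR_le. nia. }
  replace ((1 * 1 * 1) ^ 2) with 1 by ring.
  rewrite Rmult_1_l.
  replace ((2 ^ 2 * (1 * (IZR n * IZR (n - n1)) ^ 2)) / (Cnorm2 (hatZ n1) * Cnorm2 (hatZ n2))) with
    (4 * IZR n ^ 2 * (IZR (n - n1) ^ 2 / Cnorm2 (hatZ n1)) / Cnorm2 (hatZ n2)) by (field; lra).
  assert (IZR (n - n1) ^ 2 / Cnorm2 (hatZ n1) <= 1).
  { apply (Rmult_le_reg_r (Cnorm2 (hatZ n1))); auto. unfold Rdiv. rewrite Rmult_assoc, Rinv_l by lra. lra. }
  pose proof (pow2_ge_0 (IZR n)). pose proof (pow2_ge_0 (IZR (n - n1))).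
  assert (0 <= IZR (n - n1) ^ 2 / Cnorm2 (hatZ n1)) by (apply Rmult_le_pos; [lra| apply Rlt_le, Rinv_0_lt_compat; lra]).
  apply Rle_trans with (4 * IZR n ^ 2 / Cnorm2 (hatZ n2)).
  { unfold Rdiv. apply Rmult_le_compat_r. apply Rlt_le, Rinv_0_lt_compat; lra. nra. }
  unfold Rdiv.
  replace (8 * IZR n ^ 2 * / (1 + IZR n2 ^ 2)) with (4 * IZR n ^ 2 * (2 * / (1 + IZR n2 ^ 2))) by ring.
  apply Rmult_le_compat_l. lra.
  apply (Rmult_le_reg_l (Cnorm2 (hatZ n2) * (1 + IZR n2 ^ 2))). nra.
  field_simplify; lra.
Qed.


Lemma m2_bound n n1 n2 : Cnorm2 (m2 n n1 n2 (n - n1 - n2)) <= 8 * IZR n ^ 2 / (1 + IZR n2 ^ 2).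
Proof. unfold m2. rewrite Cnorm2_mul, Cnorm2_CofR.
  destruct (Cnorm2_hat n1) as [A1 B1]. destruct (Cnorm2_hat n2) as [A2 B2].
  pose proof (pow2_ge_0 (IZR n1)). pose proof (pow2_ge_0 (IZR n2)).
  assert (P1 : 0 < Cnorm2 (hatZ n1)) by lra. assert (P2 : 0 < Cnorm2 (hatZ n2)) by lra.
  rewrite Cnorm2_div by (rewrite Cnorm2_mul; nra).
  rewrite !Cnorm2_mul, !Cnorm2_CofR, Cnorm2_Ci.
  assert (R0 : 0 <= 8 * IZR n ^ 2 / (1 + IZR n2 ^ 2)).
  { apply Rmult_le_pos. pose proof (pow2_ge_0 (IZR n)). lra. apply Rlt_le, Rinv_0_lt_compat. lra. }
  unfold Defs.ind. destruct (Z.ltb_spec n 0); [|zero_tac].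
  destruct (Z.ltb_spec 0 (n2 + (n - n1 - n2))); [|zero_tac].
  destruct (Z.eqb (n - n1 - n2) 0); simpl negb; [zero_tac|].
  replace (n2 + (n - n1 - n2))%Z with (n - n1)%Z in * by ring.
  assert (Hn1 : IZR (n - n1) ^ 2 <= IZR n1 ^ 2).
  { replace (IZR (n - n1) ^ 2) with (IZR ((n - n1) * (n - n1))) by (rewrite mult_IZR; ring).
    replace (IZR n1 ^ 2) with (IZR (n1 * n1)) by (rewrite mult_IZR; ring). apply IZR_le. nia. }
  replace ((1 * 1 * 1) ^ 2) with 1 by ring.
  rewrite Rmult_1_l.
  replace ((2 ^ 2 * (1 * (IZR n * IZR (n - n1)) ^ 2)) / (Cnorm2 (hatZ n1) * Cnorm2 (hatZ n2))) with
    (4 * IZR n ^ 2 * (IZR (n - n1) ^ 2 / Cnorm2 (hatZ n1)) / Cnorm2 (hatZ n2)) by (field; lra).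
  assert (IZR (n - n1) ^ 2 / Cnorm2 (hatZ n1) <= 1).
  { apply (Rmult_le_reg_r (Cnorm2 (hatZ n1))); auto. unfold Rdiv. rewrite Rmult_assoc, Rinv_l by lra. lra. }
  pose proof (pow2_ge_0 (IZR n)). pose proof (pow2_ge_0 (IZR (n - n1))).
  assert (0 <= IZR (n - n1) ^ 2 / Cnorm2 (hatZ n1)) by (apply Rmult_le_pos; [lra| apply Rlt_le, Rinv_0_lt_compat; lra]).
  apply Rle_trans with (4 * IZR n ^ 2 / Cnorm2 (hatZ n2)).
  { unfold Rdiv. apply Rmult_le_compat_r. apply Rlt_le, Rinv_0_lt_compat; lra. nra. }
  unfold Rdiv.
  replace (8 * IZR n ^ 2 * / (1 + IZR n2 ^ 2)) with (4 * IZR n ^ 2 * (2 * / (1 + IZR n2 ^ 2))) by ring.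
  apply Rmult_le_compat_l. lra.
  apply (Rmult_le_reg_l (Cnorm2 (hatZ n2) * (1 + IZR n2 ^ 2))). nra.
  field_simplify; lra.
Qed.

Lemma m3_bound n n1 n2 n3 : Cnorm2 (m3 n n1 n2 n3) <= 8 * IZR n ^ 2 / (1 + IZR n1 ^ 2).
Proof. unfold m3. rewrite Cnorm2_mul, Cnorm2_CofR.
  destruct (Cnorm2_hat n1) as [A1 B1].
  pose proof (pow2_ge_0 (IZR n1)). assert (P1 : 0 < Cnorm2 (hatZ n1)) by lra.
  rewrite Cnorm2_div by auto.
  rewrite !Cnorm2_mul, !Cnorm2_CofR, Cnorm2_Ci.
  pose proof (pow2_ge_0 (IZR n)).
  assert (R0 : 0 <= 8 * IZR n ^ 2 / (1 + IZR n1 ^ 2)).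
  { apply Rmult_le_pos. lra. apply Rlt_le, Rinv_0_lt_compat. lra. }
  assert (Hi : forall b, 0 <= Defs.ind b ^ 2 <= 1).
  { intros b. unfold Defs.ind. destruct b; simpl; lra. }
  destruct (Hi (Z.ltb n 0)), (Hi (negb (Z.eqb (n2 * n3) 0))).
  rewrite Rpow_mult_distr.
  assert (2 ^ 2 * (1 * IZR n ^ 2) / Cnorm2 (hatZ n1) <= 8 * IZR n ^ 2 / (1 + IZR n1 ^ 2)).
  { unfold Rdiv. replace (2 ^ 2 * (1 * IZR n ^ 2) * / Cnorm2 (hatZ n1)) with (4 * IZR n ^ 2 * / Cnorm2 (hatZ n1)) by ring.
    replace (8 * IZR n ^ 2 * / (1 + IZR n1 ^ 2)) with (4 * IZR n ^ 2 * (2 * / (1 + IZR n1 ^ 2))) by ring.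
    apply Rmult_le_compat_l. lra.
    apply (Rmult_le_reg_l (Cnorm2 (hatZ n1) * (1 + IZR n1 ^ 2))). nra.
    field_simplify; lra. }
  assert (0 <= 2 ^ 2 * (1 * IZR n ^ 2) / Cnorm2 (hatZ n1)).
  { apply Rmult_le_pos. nra. apply Rlt_le, Rinv_0_lt_compat. lra. }
  set (X := 2 ^ 2 * (1 * IZR n ^ 2) / Cnorm2 (hatZ n1)) in *.
  set (i1 := Defs.ind (n <? 0)%Z ^ 2) in *. set (i2 := Defs.ind (negb (n2 * n3 =? 0)%Z) ^ 2) in *.
  assert (i1 * i2 <= 1) by nra. assert (0 <= i1 * i2) by nra. nra.
Qed.

Lemma m1t_bound n n1 n2 : Cnorm2 (m1t n n1 n2 (n - n1 - n2)) <= 8 * IZR n ^ 2 / (1 + IZR n2 ^ 2).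
Proof. unfold m1t. rewrite Cnorm2_mul, Cnorm2_CofR. pose proof (m1_bound n n1 n2).
  pose proof (Cnorm2_nonneg (m1 n n1 n2 (n - n1 - n2))).
  unfold Defs.ind. destruct (negb _); [rewrite pow1, Rmult_1_l; lra| zero_tac]. Qed.

Lemma cabs_of_norm2 z n k : Cnorm2 z <= 8 * IZR n ^ 2 / (1 + IZR k ^ 2) ->
  Cabs z <= sqrt 8 * Rabs (IZR n) / jbr k.
Proof. intros H. pose proof (jbr_pos k). pose proof (sqrt_pos 8). pose proof (Rabs_pos (IZR n)).
  assert (HR : 0 <= sqrt 8 * Rabs (IZR n) / jbr k).
  { apply Rmult_le_pos. nra. apply Rlt_le, Rinv_0_lt_compat; lra. }
  assert (Hsq : (sqrt 8 * Rabs (IZR n) / jbr k) ^ 2 = 8 * IZR n ^ 2 / (1 + IZR k ^ 2)).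
  { rewrite <- jbr_sq. unfold Rdiv. rewrite !Rpow_mult_distr. rewrite pow2_sqrt by lra.
    rewrite pow2_abs. rewrite pow_inv. ring. }
  unfold Cabs. rewrite <- (sqrt_pow2 _ HR). apply sqrt_le_1_alt. lra. Qed.

Lemma Cabs_star w k : Cabs (star w k) = Cabs (w (- k)%Z).
Proof. unfold star. apply Cabs_conj. Qed.

Lemma Nterm_bound w t n n1 n2 :
  Cabs (Nterm w t n n1 n2) <= sqrt 8 * Rabs (IZR n) *
   (Cabs (w n1) * Cabs (w n2) * Cabs (w (- (n - n1 - n2))%Z) / jbr n2 +
    Cabs (w n1) * Cabs (w (- n2)%Z) * Cabs (w (n - n1 - n2)%Z) / jbr n2 +
    Cabs (w (- n1)%Z) * Cabs (w n2) * Cabs (w (n - n1 - n2)%Z) / jbr n1).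
Proof. unfold Nterm. cbv zeta. rewrite Cabs_mul, Cabs_expi, Rmult_1_l.
  eapply Rle_trans. apply Cabs_add. eapply Rle_trans. apply Rplus_le_compat_l. apply Cabs_add.
  rewrite !Cabs_mul, !Cabs_star.
  pose proof (cabs_of_norm2 _ _ _ (m1t_bound n n1 n2)).
  pose proof (cabs_of_norm2 _ _ _ (m2_bound n n1 n2)).
  pose proof (cabs_of_norm2 _ _ _ (m3_bound n n1 n2 (n - n1 - n2))).
  set (a1 := Cabs (w n1)). set (a2 := Cabs (w n2)). set (a3 := Cabs (w (n - n1 - n2)%Z)).
  set (c1 := Cabs (w (- n1)%Z)). set (c2 := Cabs (w (- n2)%Z)). set (c3 := Cabs (w (- (n - n1 - n2))%Z)).
  assert (0 <= a1) by apply Cabs_nonneg. assert (0 <= a2) by apply Cabs_nonneg. assert (0 <= a3) by apply Cabs_nonneg.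
  assert (0 <= c1) by apply Cabs_nonneg. assert (0 <= c2) by apply Cabs_nonneg. assert (0 <= c3) by apply Cabs_nonneg.
  set (M1 := Cabs (m1t n n1 n2 (n - n1 - n2))) in *. set (M2 := Cabs (m2 n n1 n2 (n - n1 - n2))) in *.
  set (M3 := Cabs (m3 n n1 n2 (n - n1 - n2))) in *.
  set (q := sqrt 8 * Rabs (IZR n)) in *.
  unfold Rdiv in *.
  assert (M1 * (a1 * (a2 * c3)) <= q * / jbr n2 * (a1 * (a2 * c3))) by (apply Rmult_le_compat_r; [repeat apply Rmult_le_pos; lra| lra]).
  assert (M2 * (a1 * (c2 * a3)) <= q * / jbr n2 * (a1 * (c2 * a3))) by (apply Rmult_le_compat_r; [repeat apply Rmult_le_pos; lra| lra]).
  assert (M3 * (c1 * (a2 * a3)) <= q * / jbr n1 * (c1 * (a2 * a3))) by (apply Rmult_le_compat_r; [repeat apply Rmult_le_pos; lra| lra]).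
  lra.
Qed.


Lemma Un_cv_ext u v l : (forall k, u k = v k) -> Un_cv u l -> Un_cv v l.
Proof. intros H Hu eps He. destruct (Hu eps He) as [N HN]. exists N. intros k Hk. rewrite <- H. auto. Qed.

Lemma cv_const c : Un_cv (fun _ => c) c.
Proof. intros eps He. exists 0%nat. intros. unfold R_dist. rewrite Rminus_diag, Rabs_R0. auto. Qed.

Lemma cv_le u l B : Un_cv u l -> (forall k, u k <= B) -> l <= B.
Proof. intros Hu HB. destruct (Rle_or_lt l B); auto.
  destruct (Hu (l - B)) as [N HN]. lra. specialize (HN N (Nat.le_refl N)). specialize (HB N).
  unfold R_dist in HN. apply Rabs_def2 in HN. lra. Qed.

Lemma cv_sumZ K (u : nat -> Z -> R) l : (forall n, Un_cv (fun k => u k n) (l n)) ->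
  Un_cv (fun k => sumZ_R K (u k)) (sumZ_R K l).
Proof. intros H. unfold sumZ_R. generalize (2 * K + 1)%nat as m. induction m.
  - simpl. apply cv_const.
  - simpl. apply CV_plus; auto.
Qed.

Lemma cv_Cnorm2 u v : Ccv u v -> Un_cv (fun k => Cnorm2 (u k)) (Cnorm2 v).
Proof. intros [H1 H2]. unfold Cnorm2.
  apply (Un_cv_ext (fun k => Cre (u k) * Cre (u k) + Cim (u k) * Cim (u k))). intros; ring.
  replace (Cre v ^ 2 + Cim v ^ 2) with (Cre v * Cre v + Cim v * Cim v) by ring.
  apply CV_plus; apply CV_mult; auto.
Qed.

Lemma cauchy_transfer u H : (exists l, Un_cv H l) ->
  (forall K1 K2, (K1 <= K2)%nat -> Rabs (u K2 - u K1) <= H K2 - H K1) -> exists l, Un_cv u l.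
Proof. intros [l Hl] Hd.
  assert (Cu : Cauchy_crit u).
  { intros eps He. destruct (CV_Cauchy H (exist _ l Hl) eps He) as [N HN]. exists N. intros a b Ha Hb.
    unfold R_dist in *. specialize (HN a b Ha Hb).
    destruct (le_lt_dec a b).
    - pose proof (Hd a b l0). rewrite Rabs_minus_sym. rewrite Rabs_minus_sym in HN.
      assert (H b - H a <= Rabs (H b - H a)) by apply Rle_abs. lra.
    - pose proof (Hd b a ltac:(lia)). assert (H a - H b <= Rabs (H a - H b)) by apply Rle_abs. lra. }
  destruct (R_complete u Cu) as [l' Hl']. exists l'; auto.
Qed.

Definition D2 (f : Z -> Z -> R) (K : nat) : R := sumZ_R K (fun a => sumZ_R K (f a)).

Lemma D2_mono f K1 K2 : (forall a c, 0 <= f a c) -> (K1 <= K2)%nat -> D2 f K1 <= D2 f K2.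
Proof. intros Hf H. unfold D2. apply Rle_trans with (sumZ_R K1 (fun a => sumZ_R K2 (f a))).
  apply sZ_le. intros. apply sZ_mono_win; auto.
  apply sZ_mono_win; auto. intros; apply sZ_nonneg_all; auto. Qed.

Lemma sZ_cut K1 K2 f : (K1 <= K2)%nat ->
  sumZ_R K2 (fun c => f c * ind_le (Z.abs c) (Z.of_nat K1)) = sumZ_R K1 f.
Proof. intros H. rewrite (sZ_support K1 K2).
  2:{ intros n Hn. unfold ind_le, Defs.ind. destruct (Z.leb_spec (Z.abs n) (Z.of_nat K1)); [lia| ring]. } 2: auto.
  apply sZ_ext. intros n Hn. unfold ind_le, Defs.ind. unfold inW in Hn.
  destruct (Z.leb_spec (Z.abs n) (Z.of_nat K1)); [ring| lia]. Qed.

Lemma D2_cut f K1 K2 : (K1 <= K2)%nat ->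
  D2 f K1 = sumZ_R K2 (fun a => sumZ_R K2 (fun c => f a c * (ind_le (Z.abs a) (Z.of_nat K1) * ind_le (Z.abs c) (Z.of_nat K1)))).
Proof. intros H. unfold D2. rewrite <- (sZ_cut K1 K2) by auto. apply sZ_ext. intros a _.
  rewrite <- (sZ_cut K1 K2 (f a)) by auto. rewrite Rmult_comm, <- sZ_scal. apply sZ_ext. intros; ring. Qed.

Lemma D2_plus f g K : D2 (fun a c => f a c + g a c) K = D2 f K + D2 g K.
Proof. unfold D2. rewrite <- sZ_plus. apply sZ_ext. intros. apply sZ_plus. Qed.

Lemma D2_le f g K : (forall a c, f a c <= g a c) -> D2 f K <= D2 g K.
Proof. intros. unfold D2. apply sZ_le. intros. apply sZ_le. auto. Qed.

Lemma D2_diff g h K1 K2 : (forall a c, Rabs (g a c) <= h a c) -> (K1 <= K2)%nat ->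
  Rabs (D2 g K2 - D2 g K1) <= D2 h K2 - D2 h K1.
Proof. intros Hg H. rewrite !(D2_cut _ K1 K2) by auto.
  set (ch := fun a c => ind_le (Z.abs a) (Z.of_nat K1) * ind_le (Z.abs c) (Z.of_nat K1)).
  assert (Hch : forall a c, 0 <= ch a c <= 1).
  { intros. unfold ch. pose proof (ind_le_range (Z.abs a) (Z.of_nat K1)). pose proof (ind_le_range (Z.abs c) (Z.of_nat K1)). nra. }
  change (sumZ_R K2 (fun a => sumZ_R K2 (fun c => g a c * (ind_le (Z.abs a) (Z.of_nat K1) * ind_le (Z.abs c) (Z.of_nat K1)))))
    with (D2 (fun a c => g a c * ch a c) K2).
  change (sumZ_R K2 (fun a => sumZ_R K2 (fun c => h a c * (ind_le (Z.abs a) (Z.of_nat K1) * ind_le (Z.abs c) (Z.of_nat K1)))))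
    with (D2 (fun a c => h a c * ch a c) K2).
  fold (D2 g K2). fold (D2 h K2).
  apply Rabs_le. split.
  - assert (D2 (fun a c => - h a c + h a c * ch a c) K2 <= D2 (fun a c => g a c - g a c * ch a c) K2).
    { apply D2_le. intros a c. pose proof (Hg a c). apply Rabs_le_inv in H0. specialize (Hch a c). nra. }
    rewrite !D2_plus in H0. unfold Rminus in H0. rewrite D2_plus in H0.
    assert (forall f, D2 (fun a c => - f a c) K2 = - D2 f K2).
    { intros f. unfold D2. replace (- sumZ_R K2 (fun a => sumZ_R K2 (f a))) with
        (-1 * sumZ_R K2 (fun a => sumZ_R K2 (f a))) by ring. rewrite <- sZ_scal.
      apply sZ_ext. intros. rewrite <- sZ_scal. apply sZ_ext. intros; ring. }
    rewrite H1 in H0. rewrite (H1 (fun a c => g a c * ch a c)) in H0. lra.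
  - assert (D2 (fun a c => g a c + h a c * ch a c) K2 <= D2 (fun a c => h a c + g a c * ch a c) K2).
    { apply D2_le. intros a c. pose proof (Hg a c). apply Rabs_le_inv in H0. specialize (Hch a c). nra. }
    rewrite !D2_plus in H0. lra.
Qed.

Definition bf (w : Z -> Cplx) (k : Z) : R := Cabs (w k).
Definition bf' (w : Z -> Cplx) (k : Z) : R := Cabs (w (- k)%Z).

Lemma energy_b s w L : (forall K, l2sq_partial s w K <= L) -> energy_le s (bf w) L.
Proof. intros H. split. intros; apply Cabs_nonneg. intros K. eapply Rle_trans. 2: apply (H K).
  unfold l2sq_partial. right. apply sZ_ext. intros. unfold bf, wt. rewrite Cabs_sq. auto. Qed.

Lemma energy_b' s w L : (forall K, l2sq_partial s w K <= L) -> energy_le s (bf' w) L.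
Proof. intros H. split. intros; apply Cabs_nonneg. intros K. eapply Rle_trans. 2: apply (H K).
  unfold l2sq_partial. right. rewrite <- (sZ_reflect K (fun n => Rpower (jbr n) (2*s) * Cnorm2 (w n))).
  apply sZ_ext. intros. cbv beta. unfold bf', wt. rewrite Cabs_sq, jbr_opp. auto. Qed.

Lemma Npartial_abs w t n K : Cabs (Npartial w t n K) <= D2 (fun n1 n2 => Cabs (Nterm w t n n1 n2)) K.
Proof. unfold Npartial, D2. eapply Rle_trans. apply sZ_Cabs. apply sZ_le. intros. apply sZ_Cabs. Qed.

Lemma Npartial_re w t n K : Cre (Npartial w t n K) = D2 (fun n1 n2 => Cre (Nterm w t n n1 n2)) K.
Proof. unfold Npartial, D2. rewrite sZ_Cre. apply sZ_ext. intros. apply sZ_Cre. Qed.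

Lemma Npartial_im w t n K : Cim (Npartial w t n K) = D2 (fun n1 n2 => Cim (Nterm w t n n1 n2)) K.
Proof. unfold Npartial, D2. rewrite sZ_Cim. apply sZ_ext. intros. apply sZ_Cim. Qed.


Lemma D2_scal k f K : D2 (fun a c => k * f a c) K = k * D2 f K.
Proof. unfold D2. rewrite <- sZ_scal. apply sZ_ext. intros. apply sZ_scal. Qed.

Lemma Habs_bound w t n K : D2 (fun n1 n2 => Cabs (Nterm w t n n1 n2)) K <=
  sqrt 8 * Rabs (IZR n) * (Qf (bf w) (bf w) (bf' w) K n + 2 * Qf (bf' w) (bf w) (bf w) K n).
Proof. set (q := sqrt 8 * Rabs (IZR n)).
  eapply Rle_trans. apply D2_le. intros n1 n2. apply Nterm_bound. fold q.
  rewrite D2_scal, !D2_plus. apply Rmult_le_compat_l. unfold q. pose proof (sqrt_pos 8). pose proof (Rabs_pos (IZR n)). nra.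
  assert (E1 : D2 (fun n1 n2 => Cabs (w n1) * Cabs (w n2) * Cabs (w (- (n - n1 - n2))%Z) / jbr n2) K =
    Qf (bf w) (bf w) (bf' w) K n).
  { unfold D2, Qf. rewrite sZ_swap. apply sZ_ext. intros a _. apply sZ_ext. intros c _. unfold bf, bf'.
    cbv beta. replace (n - a - c)%Z with (n - c - a)%Z by ring. unfold Rdiv. ring. }
  assert (E2 : D2 (fun n1 n2 => Cabs (w n1) * Cabs (w (- n2)%Z) * Cabs (w (n - n1 - n2)%Z) / jbr n2) K =
    Qf (bf' w) (bf w) (bf w) K n).
  { unfold D2, Qf. rewrite sZ_swap. apply sZ_ext. intros a _. apply sZ_ext. intros c _. unfold bf, bf'.
    cbv beta. replace (n - a - c)%Z with (n - c - a)%Z by ring. unfold Rdiv. ring. }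
  assert (E3 : D2 (fun n1 n2 => Cabs (w (- n1)%Z) * Cabs (w n2) * Cabs (w (n - n1 - n2)%Z) / jbr n1) K =
    Qf (bf' w) (bf w) (bf w) K n).
  { unfold D2, Qf. apply sZ_ext. intros a _. apply sZ_ext. intros c _. unfold bf, bf'. cbv beta. unfold Rdiv. ring. }
  rewrite E1, E2, E3. lra.
Qed.

Lemma l2_growing s w : Un_growing (l2sq_partial s w).
Proof. intros K. unfold l2sq_partial. rewrite sZ_step.
  pose proof (Rpower_pos (jbr (- Z.of_nat (S K))) (2*s)). pose proof (Rpower_pos (jbr (Z.of_nat (S K))) (2*s)).
  pose proof (Cnorm2_nonneg (w (- Z.of_nat (S K))%Z)). pose proof (Cnorm2_nonneg (w (Z.of_nat (S K)))).
  nra. Qed.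

Lemma partial_le s w L : l2sq_is s w L -> forall K, l2sq_partial s w K <= L.
Proof. intros H K. apply growing_ineq; auto. apply l2_growing. Qed.

Lemma partial_nonneg s w K : 0 <= l2sq_partial s w K.
Proof. unfold l2sq_partial. apply sZ_nonneg_all. intros.
  pose proof (Rpower_pos (jbr n) (2*s)). pose proof (Cnorm2_nonneg (w n)). nra. Qed.

Lemma Q_sq_bound s Mc x y z E K n : 0 < s < 1/2 ->
  (forall x y z E, energy_le s x E -> energy_le s y E -> energy_le s z E -> forall K K',
     sumZ_R K (fun n => wt (4*s-1) n * (Qf x y z K' n) ^ 2) <= Mc * E ^ 3) ->
  energy_le s x E -> energy_le s y E -> energy_le s z E ->
  Qf x y z K n <= 1 + Mc * E ^ 3 / wt (4*s-1) n.
Proof. intros Hs Hc Ex Ey Ez.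
  pose proof (Hc x y z E Ex Ey Ez (Z.abs_nat n) K).
  assert (wt (4*s-1) n * Qf x y z K n ^ 2 <= Mc * E ^ 3).
  { eapply Rle_trans. 2: apply H. apply (sZ_single _ _ (fun n => wt (4*s-1) n * Qf x y z K n ^ 2)).
    intros. pose proof (wt_pos (4*s-1) n0). pose proof (pow2_ge_0 (Qf x y z K n0)). nra.
    unfold inW. lia. }
  pose proof (wt_pos (4*s-1) n).
  assert (Qf x y z K n ^ 2 <= Mc * E ^ 3 / wt (4*s-1) n).
  { apply (Rmult_le_reg_l (wt (4*s-1) n)); auto. unfold Rdiv. rewrite (Rmult_comm (Mc * E ^ 3)), <- Rmult_assoc,
    Rinv_r, Rmult_1_l by lra. auto. }
  assert (Qf x y z K n <= 1 + Qf x y z K n ^ 2) by (assert (0 <= (Qf x y z K n - 1/2)^2) by apply pow2_ge_0; nra).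
  lra.
Qed.


Theorem mainTheorem5 (s : R) (hs0 : 0 < s) (hs1 : s < 1 / 2) :
  exists C : R, 0 < C /\
  forall (T : R) (omega : R -> Z -> Cplx),
    0 < T ->
    (forall t, 0 <= t <= T -> in_l2 s (omega t)) ->
    (forall t, 0 <= t <= T -> forall eps, 0 < eps ->
       exists delta, 0 < delta /\
       forall t', 0 <= t' <= T -> Rabs (t' - t) < delta ->
         forall K, l2sq_partial s (fun n => Csub (omega t' n) (omega t n)) K <= eps ^ 2) ->
    forall t, 0 <= t <= T ->
      (forall n, exists v, Nval (omega t) t n v) /\
      (forall (Nw : Z -> Cplx) (L : R),
         (forall n, Nval (omega t) t n (Nw n)) ->
         l2sq_is s (omega t) L ->
         exists LN, l2sq_is (2 * s - 3 / 2) Nw LN /\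
                    sqrt LN <= C * sqrt L ^ 3).
Proof.
  assert (Hs : 0 < s < 1/2) by lra.
  destruct (Core s Hs) as [Mc [HMc Hcore]].
  exists (sqrt (128 * Mc)). split. apply sqrt_lt_R0; lra.
  intros T omega HT Hl2 Hcont t Ht.
  set (w := omega t).
  split.
  -
    destruct (Hl2 t Ht) as [L HL]. fold w in HL.
    pose proof (partial_le _ _ _ HL) as PL.
    pose proof (energy_b s w L PL) as Eb. pose proof (energy_b' s w L PL) as Eb'.
    intros n.
    set (Rn := 1 + Mc * L ^ 3 / wt (4*s-1) n).
    set (H := D2 (fun n1 n2 => Cabs (Nterm w t n n1 n2))).
    assert (HB : forall K, H K <= sqrt 8 * Rabs (IZR n) * (Rn + 2 * Rn)).
    { intros K. unfold H. eapply Rle_trans. apply Habs_bound. apply Rmult_le_compat_l.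
      pose proof (sqrt_pos 8). pose proof (Rabs_pos (IZR n)). nra.
      pose proof (Q_sq_bound s Mc _ _ _ L K n Hs Hcore Eb Eb Eb').
      pose proof (Q_sq_bound s Mc _ _ _ L K n Hs Hcore Eb' Eb Eb). fold Rn in H0, H1. lra. }
    assert (Hg : Un_growing H).
    { intros K. unfold H. apply D2_mono. intros; apply Cabs_nonneg. lia. }
    destruct (growing_cv H Hg) as [lH HlH].
    { exists (sqrt 8 * Rabs (IZR n) * (Rn + 2 * Rn)). intros x [K ->]. apply HB. }
    assert (Hre : exists l, Un_cv (fun K => Cre (Npartial w t n K)) l).
    { apply (cauchy_transfer _ H). exists lH; auto. intros K1 K2 HK.
      rewrite !Npartial_re. apply D2_diff; auto. intros; apply Cre_le. }
    assert (Him : exists l, Un_cv (fun K => Cim (Npartial w t n K)) l).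
    { apply (cauchy_transfer _ H). exists lH; auto. intros K1 K2 HK.
      rewrite !Npartial_im. apply D2_diff; auto. intros; apply Cim_le. }
    destruct Hre as [lr Hr]. destruct Him as [li Hi].
    exists (lr, li). split; auto.
  - intros Nw L HNw HL. fold w in HL, HNw.
    pose proof (partial_le _ _ _ HL) as PL.
    pose proof (energy_b s w L PL) as Eb. pose proof (energy_b' s w L PL) as Eb'.
    assert (HL0 : 0 <= L) by (pose proof (partial_nonneg s w 0); pose proof (PL 0%nat); lra).
    set (Bd := 128 * Mc * L ^ 3).
    assert (HK : forall K, l2sq_partial (2 * s - 3 / 2) Nw K <= Bd).
    { intros K. unfold l2sq_partial.
      apply (cv_le (fun K' => sumZ_R K (fun n => Rpower (jbr n) (2 * (2 * s - 3 / 2)) * Cnorm2 (Npartial w t n K')))).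
      - apply (cv_sumZ K (fun K' n => Rpower (jbr n) (2 * (2 * s - 3 / 2)) * Cnorm2 (Npartial w t n K'))
           (fun n => Rpower (jbr n) (2 * (2 * s - 3 / 2)) * Cnorm2 (Nw n))).
        intros n. apply CV_mult. apply cv_const. apply cv_Cnorm2. apply HNw.
      - intros K'.
        set (Q1 := fun n => Qf (bf w) (bf w) (bf' w) K' n). set (Q2 := fun n => Qf (bf' w) (bf w) (bf w) K' n).
        apply Rle_trans with (sumZ_R K (fun n => 64 * (wt (4*s-1) n * Q1 n ^ 2) + 64 * (wt (4*s-1) n * Q2 n ^ 2))).
        + apply sZ_le. intros n _.
          assert (HQ1 : 0 <= Q1 n). { unfold Q1, Qf. apply sZ_nonneg_all; intros; apply sZ_nonneg_all; intros.
            unfold bf, bf'. pose proof (Cabs_nonneg (w n0)). pose proof (Cabs_nonneg (w n1)).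
            pose proof (Cabs_nonneg (w (- (n - n0 - n1)))%Z). pose proof (jbr_pos n0).
            apply Rmult_le_pos. repeat apply Rmult_le_pos; lra. apply Rlt_le, Rinv_0_lt_compat; lra. }
          assert (HQ2 : 0 <= Q2 n). { unfold Q2, Qf. apply sZ_nonneg_all; intros; apply sZ_nonneg_all; intros.
            unfold bf, bf'. pose proof (Cabs_nonneg (w (- n0)%Z)). pose proof (Cabs_nonneg (w n1)).
            pose proof (Cabs_nonneg (w (n - n0 - n1))%Z). pose proof (jbr_pos n0).
            apply Rmult_le_pos. repeat apply Rmult_le_pos; lra. apply Rlt_le, Rinv_0_lt_compat; lra. }
          assert (Hab : Cabs (Npartial w t n K') <= sqrt 8 * Rabs (IZR n) * (Q1 n + 2 * Q2 n)).
          { eapply Rle_trans. apply Npartial_abs. apply Habs_bound. }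
          assert (Hn2 : Cnorm2 (Npartial w t n K') <= 8 * IZR n ^ 2 * (2 * Q1 n ^ 2 + 8 * Q2 n ^ 2)).
          { rewrite <- Cabs_sq. pose proof (Cabs_nonneg (Npartial w t n K')).
            apply Rle_trans with ((sqrt 8 * Rabs (IZR n) * (Q1 n + 2 * Q2 n)) ^ 2).
            apply pow_incr; lra.
            rewrite !Rpow_mult_distr, pow2_sqrt, pow2_abs by lra.
            assert (0 <= (Q1 n - 2 * Q2 n) ^ 2) by apply pow2_ge_0.
            pose proof (pow2_ge_0 (IZR n)). 
            assert ((Q1 n + 2 * Q2 n) ^ 2 <= 2 * Q1 n ^ 2 + 8 * Q2 n ^ 2) by nra.
            replace (8 * IZR n ^ 2 * (Q1 n + 2 * Q2 n) ^ 2) with ((8 * IZR n ^ 2) * (Q1 n + 2 * Q2 n) ^ 2) by ring.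
            apply Rmult_le_compat_l; lra. }
          assert (Hw : Rpower (jbr n) (2 * (2 * s - 3 / 2)) * IZR n ^ 2 <= wt (4*s-1) n).
          { replace (4*s-1) with (2 * (2 * s - 3 / 2) + 2) by lra. rewrite wt_plus, wt_2.
            fold (wt (2 * (2 * s - 3 / 2)) n). apply Rmult_le_compat_l. apply Rlt_le, wt_pos. lra. }
          pose proof (Rpower_pos (jbr n) (2 * (2 * s - 3 / 2))).
          apply Rle_trans with (Rpower (jbr n) (2 * (2 * s - 3 / 2)) * (8 * IZR n ^ 2 * (2 * Q1 n ^ 2 + 8 * Q2 n ^ 2))).
          apply Rmult_le_compat_l; lra.
          pose proof (pow2_ge_0 (Q1 n)). pose proof (pow2_ge_0 (Q2 n)).
          replace (Rpower (jbr n) (2 * (2 * s - 3 / 2)) * (8 * IZR n ^ 2 * (2 * Q1 n ^ 2 + 8 * Q2 n ^ 2))) with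
            ((Rpower (jbr n) (2 * (2 * s - 3 / 2)) * IZR n ^ 2) * (16 * Q1 n ^ 2 + 64 * Q2 n ^ 2)) by ring.
          replace (64 * (wt (4 * s - 1) n * Q1 n ^ 2) + 64 * (wt (4 * s - 1) n * Q2 n ^ 2)) with
            (wt (4 * s - 1) n * (64 * Q1 n ^ 2 + 64 * Q2 n ^ 2)) by ring.
          apply Rmult_le_compat; try lra. apply Rmult_le_pos. lra. apply pow2_ge_0.
        + rewrite sZ_plus, !sZ_scal. unfold Q1, Q2.
          pose proof (Hcore _ _ _ _ Eb Eb Eb' K K'). pose proof (Hcore _ _ _ _ Eb' Eb Eb K K').
          unfold Bd. lra. }
    assert (Hg : Un_growing (l2sq_partial (2 * s - 3 / 2) Nw)) by apply l2_growing.
    destruct (growing_cv _ Hg) as [LN HLN].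
    { exists Bd. intros x [K ->]. apply HK. }
    exists LN. split. exact HLN.
    assert (LN <= Bd) by (apply (cv_le _ _ _ HLN HK)).
    assert (0 <= LN) by (pose proof (growing_ineq _ _ Hg HLN 0%nat); pose proof (partial_nonneg (2 * s - 3 / 2) Nw 0); lra).
    eapply Rle_trans. apply sqrt_le_1_alt. apply H.
    unfold Bd. rewrite sqrt_mult by (try lra; apply pow_le; lra).
    apply Rmult_le_compat_l. apply sqrt_pos.
    right. rewrite <- (sqrt_pow2 (sqrt L ^ 3)) by (apply pow_le, sqrt_pos).
    f_equal. assert (Hsq : sqrt L * sqrt L = L) by (apply sqrt_sqrt; lra).
    replace (L ^ 3) with ((sqrt L * sqrt L) ^ 3) by (rewrite Hsq; reflexivity). ring.
Qed.
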